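(* Let $\delta:\,]0,+\infty[\to\mathbb R$ be nonnegative, bounded and continuously differentiable, and consider $\ddot r+\delta(r)\dot r=-1/r^2$, $r>0$. Fix $T,r_B>0$. Let $\mathcal I$ be the set of $v\in\mathbb R$ such that the solution $r$ with $r(0)=r_B$, $\dot r(0)=v$ is defined (with $r>0$) in the past up to time $t=-T$, and define $\mathfrak R:\mathcal I\to\mathbb R$ by $\mathfrak R(v)=r(-T)$. Then: (i) there exists $\beta\in\mathbb R$ such that $\mathcal I=\,]-\infty,\beta[$; (ii) $\mathfrak R$ is a decreasing diffeomorphism from $]-\infty,\beta[$ onto $]0,+\infty[$; precisely, $\mathfrak R'(v)<0$ for every $v<\beta$, $\lim_{v\to-\infty}\mathfrak R(v)=+\infty$ and $\lim_{v\to\beta^-}\mathfrak R(v)=0$. *)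

(* Defs.v *)
From Stdlib Require Import Reals.
From Coquelicot Require Import Coquelicot.
Open Scope R_scope.

Definition admissible_delta (delta : R -> R) : Prop :=
  (forall x, 0 < x -> 0 <= delta x) /\
  (exists M, forall x, 0 < x -> delta x <= M) /\
  (forall x, 0 < x -> ex_derive delta x) /\
  (forall x, 0 < x -> continuous (Derive delta) x).

Definition past_solution (delta : R -> R) (T rB v : R) (r : R -> R) : Prop :=
  r 0 = rB /\ Derive r 0 = v /\
  forall t, -T <= t <= 0 ->
    0 < r t /\
    ex_derive r t /\
    is_derive (Derive r) t (- delta (r t) * Derive r t - 1 / (r t) ^ 2).

Definition in_I (delta : R -> R) (T rB v : R) : Prop :=
  exists r, past_solution delta T rB v r.

(* Main.v *)
Require Import Defs.
From Stdlib Require Import Reals Lra Lia Psatz Classical ClassicalEpsilon.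
From Coquelicot Require Import Coquelicot.
Open Scope R_scope.

Lemma cont_of_eps (f : R -> R) x :
  (forall eps, 0 < eps -> exists d, 0 < d /\ forall y, Rabs (y - x) < d -> Rabs (f y - f x) < eps) ->
  continuous f x.
Proof.
  intros H. apply continuity_pt_filterlim.
  unfold continuity_pt, continue_in, limit1_in, limit_in. simpl.
  intros eps Heps. destruct (H eps Heps) as [d [Hd Hy]].
  exists d; split; auto. intros y [_ Hy']. unfold R_dist in *. apply Hy; auto.
Qed.

Lemma eps_of_cont (f : R -> R) x : continuous f x ->
  forall eps, 0 < eps -> exists d, 0 < d /\ forall y, Rabs (y - x) < d -> Rabs (f y - f x) < eps.
Proof.
  intros H. apply continuity_pt_filterlim in H.
  unfold continuity_pt, continue_in, limit1_in, limit_in in H. simpl in H.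
  intros eps Heps. destruct (H eps Heps) as [d [Hd Hy]].
  exists d; split; auto. intros y Hyx.
  destruct (Req_dec y x) as [->|Hne]. rewrite Rminus_diag, Rabs_R0; auto.
  apply Hy. split. split; auto. exact I. unfold R_dist; auto.
Qed.

Lemma lip_cont (f : R -> R) K x : 0 <= K ->
  (forall y, Rabs (f y - f x) <= K * Rabs (y - x)) -> continuous f x.
Proof.
  intros HK H. apply cont_of_eps. intros eps He.
  exists (eps / (K + 1)). split. apply Rdiv_lt_0_compat; lra.
  intros y Hy. eapply Rle_lt_trans. apply H.
  apply Rle_lt_trans with ((K+1) * Rabs (y - x)). pose proof (Rabs_pos (y - x)); nra.
  apply Rmult_lt_reg_r with (/ (K+1)). apply Rinv_0_lt_compat; lra.
  replace ((K + 1) * Rabs (y - x) * / (K + 1)) with (Rabs (y - x)) by (field; lra).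
  exact Hy.
Qed.

Lemma mvt (f df : R -> R) a b : a < b ->
  (forall x, a <= x <= b -> is_derive f x (df x)) ->
  exists c, a < c < b /\ f b - f a = df c * (b - a).
Proof.
  intros Hab H. destruct (MVT_cor2 f df a b Hab) as [c [Hc1 Hc2]].
  intros c Hc; apply is_derive_Reals; apply H; lra.
  exists c; split; [lra|auto].
Qed.

Lemma deriv_le (f df : R -> R) a b : a <= b ->
  (forall x, a <= x <= b -> is_derive f x (df x)) ->
  (forall x, a < x < b -> 0 <= df x) -> f a <= f b.
Proof.
  intros Hab H Hd. destruct (Req_dec a b) as [->|Hne]. lra.
  destruct (mvt f df a b) as [c [Hc E]]; auto. lra.
  specialize (Hd c Hc). nra.
Qed.

Lemma deriv_lt (f df : R -> R) a b : a < b ->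
  (forall x, a <= x <= b -> is_derive f x (df x)) ->
  (forall x, a < x < b -> 0 < df x) -> f a < f b.
Proof.
  intros Hab H Hd. destruct (mvt f df a b) as [c [Hc E]]; auto.
  specialize (Hd c Hc). nra.
Qed.

Lemma deriv_const (f df : R -> R) a b : a <= b ->
  (forall x, a <= x <= b -> is_derive f x (df x)) ->
  (forall x, a < x < b -> df x = 0) -> f a = f b.
Proof.
  intros Hab H Hd. apply Rle_antisym.
  apply (deriv_le f df a b); auto. intros x Hx; rewrite Hd; auto; lra.
  assert (- f a <= - f b); [|lra].
  apply (deriv_le (fun x => - f x) (fun x => - df x) a b); auto.
  intros x Hx. apply (is_derive_opp f x (df x)); auto.
  intros x Hx; rewrite Hd; auto; lra.
Qed.

Lemma deriv_neg_right (f : R -> R) x l : is_derive f x l -> l < 0 ->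
  exists d, 0 < d /\ forall y, x < y < x + d -> f y < f x.
Proof.
  intros H Hl. apply is_derive_Reals in H.
  destruct (H (- l / 2)) as [d Hd]. lra.
  exists d. split. apply cond_pos.
  intros y Hy. specialize (Hd (y - x)).
  replace (x + (y - x)) with y in Hd by ring.
  assert (Hyx : 0 < y - x) by lra.
  assert (Habs : Rabs ((f y - f x) / (y - x) - l) < - l / 2).
  { apply Hd. lra. rewrite Rabs_right; lra. }
  apply Rabs_def2 in Habs. destruct Habs as [H1 H2].
  assert ((f y - f x) / (y - x) < 0) by lra.
  assert (f y - f x < 0); [|lra].
  replace (f y - f x) with ((f y - f x) / (y - x) * (y - x)) by (field; lra).
  nra.
Qed.

Lemma deriv_pos_left (f : R -> R) x l : is_derive f x l -> 0 < l ->
  exists d, 0 < d /\ forall y, x - d < y < x -> f y < f x.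
Proof.
  intros H Hl. apply is_derive_Reals in H.
  destruct (H (l / 2)) as [d Hd]. lra.
  exists d. split. apply cond_pos.
  intros y Hy. specialize (Hd (y - x)).
  replace (x + (y - x)) with y in Hd by ring.
  assert (Hyx : y - x < 0) by lra.
  assert (Habs : Rabs ((f y - f x) / (y - x) - l) < l / 2).
  { apply Hd. lra. rewrite Rabs_left; lra. }
  apply Rabs_def2 in Habs. destruct Habs as [H1 H2].
  assert (0 < (f y - f x) / (y - x)) by lra.
  assert (f y - f x < 0); [|lra].
  replace (f y - f x) with ((f y - f x) / (y - x) * (y - x)) by (field; lra).
  nra.
Qed.

Lemma cont_lt_nbhd (f : R -> R) x c : continuous f x -> f x < c ->
  exists d, 0 < d /\ forall y, Rabs (y - x) < d -> f y < c.
Proof.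
  intros H Hc. destruct (eps_of_cont f x H (c - f x)) as [d [Hd Hy]]. lra.
  exists d; split; auto. intros y Hyx. specialize (Hy y Hyx).
  apply Rabs_def2 in Hy. lra.
Qed.

Lemma barrier (f : R -> R) a b : a <= b ->
  (forall x, a <= x <= b -> continuous f x) -> f a < 0 ->
  (forall s, a < s <= b -> (forall x, a <= x < s -> f x < 0) -> f s < 0) ->
  forall x, a <= x <= b -> f x < 0.
Proof.
  intros Hab Hc Ha Hstep.
  set (E := fun s => a <= s <= b /\ forall x, a <= x <= s -> f x < 0).
  assert (HE : bound E). { exists b. intros s [Hs _]. lra. }
  assert (HEa : exists s, E s). { exists a. split. lra. intros x Hx. replace x with a by lra. auto. }
  destruct (completeness E HE HEa) as [S [HS1 HS2]].
  assert (HaS : a <= S). { apply HS1. split. lra. intros x Hx. replace x with a by lra. auto. }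
  assert (HSb : S <= b). { apply HS2. intros s [Hs _]. lra. }
  assert (Hbelow : forall x, a <= x < S -> f x < 0).
  { intros x Hx. destruct (classic (exists s, E s /\ x <= s)) as [[s [[_ Hs] Hxs]]|Hno].
    apply Hs. lra.
    exfalso. assert (S <= x); [|lra]. apply HS2. intros s Es.
    destruct (Rle_dec s x); auto. exfalso. apply Hno. exists s. split; auto. lra. }
  assert (HfS : f S < 0).
  { destruct (Req_dec a S) as [<-|Hne]. auto. apply Hstep. lra. auto. }
  assert (HES : S = b).
  { destruct (Req_dec S b) as [|Hne]; auto. exfalso.
    destruct (cont_lt_nbhd f S 0) as [d [Hd Hy]]. apply Hc; lra. auto.
    set (s' := Rmin b (S + d / 2)).
    assert (S < s') by (unfold s'; apply Rmin_case; lra).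
    assert (s' <= S); [|lra].
    assert (s' <= b) by (unfold s'; apply Rmin_l).
    apply HS1. split. lra.
    intros x Hx. destruct (Rlt_dec x S). apply Hbelow; lra.
    apply Hy. rewrite Rabs_right. assert (s' <= S + d/2) by (unfold s'; apply Rmin_r). lra. lra. }
  intros x Hx. destruct (Req_dec x b) as [->|Hne]. rewrite <- HES; auto.
  apply Hbelow. lra.
Qed.

Ltac fld := field; repeat split; try (apply Rgt_not_eq; lra); try (apply Rlt_not_eq; lra).

Lemma d_plus (f g : R -> R) x df dg : is_derive f x df -> is_derive g x dg ->
  is_derive (fun x => f x + g x) x (df + dg).
Proof. intros; exact (is_derive_plus f g x df dg H H0). Qed.
Lemma d_minus (f g : R -> R) x df dg : is_derive f x df -> is_derive g x dg ->
  is_derive (fun x => f x - g x) x (df - dg).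
Proof. intros; exact (is_derive_minus f g x df dg H H0). Qed.
Lemma d_opp (f : R -> R) x df : is_derive f x df -> is_derive (fun x => - f x) x (- df).
Proof. intros; exact (is_derive_opp f x df H). Qed.
Lemma d_const (c : R) x : is_derive (fun _ => c) x 0.
Proof. exact (is_derive_const c x). Qed.
Lemma d_id x : is_derive (fun x : R => x) x 1.
Proof. exact (is_derive_id x). Qed.
Lemma d_mult (f g : R -> R) x df dg : is_derive f x df -> is_derive g x dg ->
  is_derive (fun x => f x * g x) x (df * g x + f x * dg).
Proof. intros. exact (is_derive_mult f g x df dg H H0 Rmult_comm). Qed.
Lemma d_comp (f g : R -> R) x df dg : is_derive f (g x) df -> is_derive g x dg ->
  is_derive (fun x => f (g x)) x (dg * df).
Proof. intros. exact (is_derive_comp f g x df dg H H0). Qed.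
Lemma d_ext (f g : R -> R) x l l' : (forall t, f t = g t) -> l = l' -> is_derive f x l -> is_derive g x l'.
Proof. intros H -> Hd. apply (is_derive_ext f g); auto. Qed.
Lemma d_val (f : R -> R) x l l' : l = l' -> is_derive f x l -> is_derive f x l'.
Proof. intros ->; auto. Qed.
Lemma d_exp_lin c x : is_derive (fun x => exp (c * x)) x (c * exp (c * x)).
Proof.
  apply (d_comp exp (fun x => c * x)). apply is_derive_exp.
  apply (d_val _ _ (c * 1)). apply Rmult_1_r. apply is_derive_scal, d_id.
Qed.

Lemma gronwall (E dE : R -> R) lam beta S : 0 <= lam -> 0 <= beta ->
  (forall s, 0 <= s <= S -> is_derive E s (dE s)) ->
  (forall s, 0 <= s <= S -> dE s <= lam * E s + beta) ->
  forall s, 0 <= s <= S -> E s <= (E 0 + beta * s) * exp (lam * s).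
Proof.
  intros Hl Hb Hd Hle s Hs.
  assert (H : E s * exp (- lam * s) - beta * s <= E 0 * exp (- lam * 0) - beta * 0).
  { set (H := fun x => - (E x * exp (- lam * x) - beta * x)).
    assert (H0 : H 0 <= H s); [|unfold H in H0; lra].
    apply (deriv_le H (fun x => - (dE x * exp (- lam * x) + E x * (- lam * exp (- lam * x)) - beta * 1)) 0 s).
    lra.
    intros x Hx. unfold H. eapply d_val; [| apply d_opp, d_minus; [apply d_mult; [apply Hd; lra | apply (d_exp_lin (- lam))] | apply is_derive_scal, d_id]].
    reflexivity.
    intros x Hx. assert (Hx' : 0 <= x <= S) by lra.
    pose proof (Hle x Hx'). pose proof (exp_pos (- lam * x)).
    assert (exp (- lam * x) <= 1).
    { rewrite <- exp_0. destruct (Req_dec (-lam*x) 0) as [->|]. lra.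
      left. apply exp_increasing. nra. }
    nra. }
  replace (- lam * 0) with 0 in H by ring. rewrite exp_0 in H.
  assert (Hee : exp (- lam * s) * exp (lam * s) = 1).
  { rewrite <- exp_plus. replace (- lam * s + lam * s) with 0 by ring. apply exp_0. }
  pose proof (exp_pos (lam * s)).
  replace (E s) with (E s * exp (- lam * s) * exp (lam * s)).
  apply Rmult_le_compat_r; lra.
  rewrite Rmult_assoc, Hee; ring.
Qed.

Lemma growth2 (G1 G2 dG1 dG2 : R -> R) K c t : 0 < c -> 0 <= K ->
  (forall s, is_derive G1 s (dG1 s)) -> (forall s, is_derive G2 s (dG2 s)) ->
  G1 0 = 0 -> G2 0 = 0 ->
  (forall s, Rabs (dG1 s) + Rabs (dG2 s) <= K * exp (c * Rabs s)) ->
  Rabs (G1 t) + Rabs (G2 t) <= K / c * exp (c * Rabs t).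
Proof.
  intros Hc HK H1 H2 Z1 Z2 Hb.
  set (e1 := if Rle_dec 0 (G1 t) then 1 else -1).
  set (e2 := if Rle_dec 0 (G2 t) then 1 else -1).
  assert (E1 : e1 * G1 t = Rabs (G1 t)).
  { unfold e1; destruct (Rle_dec 0 (G1 t)). rewrite Rabs_right; lra. rewrite Rabs_left; lra. }
  assert (E2 : e2 * G2 t = Rabs (G2 t)).
  { unfold e2; destruct (Rle_dec 0 (G2 t)). rewrite Rabs_right; lra. rewrite Rabs_left; lra. }
  assert (Be : forall s, e1 * dG1 s + e2 * dG2 s <= Rabs (dG1 s) + Rabs (dG2 s)
                /\ - (e1 * dG1 s + e2 * dG2 s) <= Rabs (dG1 s) + Rabs (dG2 s)).
  { intros s. unfold e1, e2. destruct (Rle_dec 0 (G1 t)); destruct (Rle_dec 0 (G2 t));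
    pose proof (Rle_abs (dG1 s)); pose proof (Rle_abs (- dG1 s)); rewrite Rabs_Ropp in *;
    pose proof (Rle_abs (dG2 s)); pose proof (Rle_abs (- dG2 s)); rewrite Rabs_Ropp in *; lra. }
  assert (Kc : 0 <= K / c) by (apply Rdiv_le_0_compat; lra).
  destruct (Rle_dec 0 t) as [Ht|Ht].
  - set (H := fun s => K / c * exp (c * s) - (e1 * G1 s + e2 * G2 s)).
    assert (H 0 <= H t).
    { apply (deriv_le H (fun s => K / c * (c * exp (c * s)) - (e1 * dG1 s + e2 * dG2 s)) 0 t); auto.
      intros x _. unfold H. apply d_minus. apply is_derive_scal, d_exp_lin.
      apply d_plus; apply is_derive_scal; auto.
      intros x Hx. destruct (Be x) as [B1 _]. specialize (Hb x). rewrite (Rabs_right x) in Hb by lra.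
      replace (K / c * (c * exp (c * x))) with (K * exp (c * x)) by (fld). lra. }
    unfold H in H0. rewrite Z1, Z2, Rmult_0_r, exp_0 in H0. rewrite (Rabs_right t) by lra. lra.
  - set (H := fun s => - (K / c * exp (- c * s) - (e1 * G1 s + e2 * G2 s))).
    assert (H t <= H 0).
    { apply (deriv_le H (fun s => - (K / c * (- c * exp (- c * s)) - (e1 * dG1 s + e2 * dG2 s))) t 0); try lra.
      intros x _. unfold H. apply d_opp, d_minus. apply is_derive_scal, d_exp_lin.
      apply d_plus; apply is_derive_scal; auto.
      intros x Hx. destruct (Be x) as [_ B2]. specialize (Hb x). rewrite (Rabs_left x) in Hb by lra.
      replace (K / c * (- c * exp (- c * x))) with (- (K * exp (c * - x))) by (replace (c * - x) with (- c * x) by ring; fld). lra. }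
    unfold H in H0. rewrite Z1, Z2, Rmult_0_r, exp_0 in H0. rewrite (Rabs_left t) by lra.
    replace (c * - t) with (- c * t) by ring. lra.
Qed.

Lemma prim_deriv (f : R -> R) c : (forall t, continuous f t) ->
  forall t, is_derive (fun t => c + RInt f 0 t) t (f t).
Proof.
  intros Hf t. eapply d_val; [| apply d_plus; [apply d_const | ]].
  2: { apply (is_derive_RInt f (RInt f 0) 0 t).
       apply filter_forall. intros b. apply (@RInt_correct R_CompleteNormedModule), (@ex_RInt_continuous R_CompleteNormedModule).
       intros; auto. apply Hf. }
  simpl. ring.
Qed.

Lemma prim_zero (f : R -> R) c : c + RInt f 0 0 = c.
Proof. rewrite RInt_point. unfold zero; simpl. ring. Qed.

Lemma small_zero x K : 0 <= K -> (forall n, Rabs x <= K * (1/2) ^ n) -> x = 0.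
Proof.
  intros HK H. destruct (Req_dec x 0) as [|Hx]; auto. exfalso.
  assert (Hp : 0 < Rabs x) by (apply Rabs_pos_lt; auto).
  destruct (pow_lt_1_zero (1/2)) with (y := Rabs x / (K + 1)) as [N HN].
  rewrite Rabs_right; lra. apply Rdiv_lt_0_compat; lra.
  specialize (HN N (le_n N)). specialize (H N).
  rewrite Rabs_right in HN by (left; apply pow_lt; lra).
  assert ((K + 1) * (1/2)^N < Rabs x).
  { apply Rmult_lt_reg_r with (/ (K+1)). apply Rinv_0_lt_compat; lra.
    replace ((K + 1) * (1 / 2) ^ N * / (K + 1)) with ((1/2)^N) by (fld). exact HN. }
  pose proof (pow_lt (1/2) N). nra.
Qed.

Lemma der_cont (f : R -> R) x l : is_derive f x l -> continuous f x.
Proof. intros H. apply (@ex_derive_continuous R_AbsRing R_NormedModule). exists l; exact H. Qed.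

Lemma prim_deriv_a (f : R -> R) c a : (forall t, continuous f t) ->
  forall t, is_derive (fun t => c + RInt f a t) t (f t).
Proof.
  intros Hf t. eapply d_val; [| apply d_plus; [apply d_const | ]].
  2: { apply (is_derive_RInt f (RInt f a) a t).
       apply filter_forall. intros b. apply (@RInt_correct R_CompleteNormedModule), (@ex_RInt_continuous R_CompleteNormedModule).
       intros; auto. apply Hf. }
  simpl. ring.
Qed.

Lemma quad_rem (g dg : R -> R) K x y :
  (forall s, Rmin x y <= s <= Rmax x y -> is_derive g s (dg s)) ->
  (forall s, Rmin x y <= s <= Rmax x y -> Rabs (dg s - dg x) <= K * Rabs (s - x)) ->
  Rabs (g y - g x - dg x * (y - x)) <= K * (y - x) ^ 2.
Proof.
  intros Hd Hk.
  destruct (Rtotal_order x y) as [Hxy|[<-|Hxy]].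
  - rewrite Rmin_left, Rmax_right in * by lra.
    destruct (mvt g dg x y Hxy Hd) as [c [Hc E]].
    replace (g y - g x - dg x * (y - x)) with ((dg c - dg x) * (y - x)) by (rewrite <- (Rplus_0_r (g y)); lra).
    rewrite Rabs_mult. specialize (Hk c ltac:(lra)). rewrite (Rabs_right (y - x)) by lra.
    rewrite (Rabs_right (c - x)) in Hk by lra. pose proof (Rabs_pos (dg c - dg x)).
    assert (0 <= K) by (apply Rle_trans with (Rabs (dg c - dg x) / (c - x)); [apply Rdiv_le_0_compat; lra|
      apply Rmult_le_reg_r with (c - x); [lra|]; unfold Rdiv; rewrite Rmult_assoc, Rinv_l by lra; lra]).
    apply Rle_trans with (K * (c - x) * (y - x)). apply Rmult_le_compat_r; lra.
    simpl. assert (K * (c - x) <= K * (y - x)) by (apply Rmult_le_compat_l; lra). nra.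
  - replace (g x - g x - dg x * (x - x)) with 0 by ring. rewrite Rabs_R0.
    replace ((x - x)^2) with 0 by ring. lra.
  - rewrite Rmin_right, Rmax_left in * by lra.
    destruct (mvt g dg y x Hxy Hd) as [c [Hc E]].
    replace (g y - g x - dg x * (y - x)) with ((dg c - dg x) * (y - x)) by lra.
    rewrite Rabs_mult. specialize (Hk c ltac:(lra)). rewrite (Rabs_left (y - x)) by lra.
    rewrite (Rabs_left (c - x)) in Hk by lra. pose proof (Rabs_pos (dg c - dg x)).
    assert (0 <= K) by (apply Rle_trans with (Rabs (dg c - dg x) / (x - c)); [apply Rdiv_le_0_compat; lra|
      apply Rmult_le_reg_r with (x - c); [lra|]; unfold Rdiv; rewrite Rmult_assoc, Rinv_l by lra; lra]).
    apply Rle_trans with (K * - (c - x) * - (y - x)). apply Rmult_le_compat_r; lra.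
    simpl. assert (K * - (c - x) <= K * - (y - x)) by (apply Rmult_le_compat_l; lra). nra.
Qed.

Lemma lip_of_der (g dg : R -> R) K a b x y : a <= x <= b -> a <= y <= b ->
  (forall s, a <= s <= b -> is_derive g s (dg s)) -> (forall s, a <= s <= b -> Rabs (dg s) <= K) ->
  Rabs (g x - g y) <= K * Rabs (x - y).
Proof.
  intros Hx Hy Hd Hk.
  destruct (Rtotal_order x y) as [Hxy|[<-|Hxy]].
  - destruct (mvt g dg x y Hxy) as [c [Hc E]]. intros; apply Hd; lra.
    rewrite Rabs_minus_sym, (Rabs_minus_sym x), E, Rabs_mult.
    apply Rmult_le_compat_r. apply Rabs_pos. apply Hk; lra.
  - rewrite !Rminus_diag, Rabs_R0. pose proof (Hk x Hx). pose proof (Rabs_pos (dg x)). lra.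
  - destruct (mvt g dg y x Hxy) as [c [Hc E]]. intros; apply Hd; lra.
    rewrite E, Rabs_mult.
    apply Rmult_le_compat_r. apply Rabs_pos. apply Hk; lra.
Qed.

Definition lipF (F1 F2 : R -> R -> R -> R) L := forall t u w u' w',
  Rabs (F1 t u w - F1 t u' w') + Rabs (F2 t u w - F2 t u' w') <= L * (Rabs (u - u') + Rabs (w - w')).
Definition contF (F1 F2 : R -> R -> R -> R) := forall u w : R -> R,
  (forall t, continuous u t) -> (forall t, continuous w t) ->
  forall t, continuous (fun s => F1 s (u s) (w s)) t /\ continuous (fun s => F2 s (u s) (w s)) t.
Definition bndF (F1 F2 : R -> R -> R -> R) u0 w0 B :=
  forall t, Rabs (F1 t u0 w0) + Rabs (F2 t u0 w0) <= B.

Fixpoint pic (F1 F2 : R -> R -> R -> R) (u0 w0 : R) (n : nat) : (R -> R) * (R -> R) :=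
  match n with
  | O => (fun _ => u0, fun _ => w0)
  | S n => let p := pic F1 F2 u0 w0 n in
     (fun t => u0 + RInt (fun s => F1 s (fst p s) (snd p s)) 0 t,
      fun t => w0 + RInt (fun s => F2 s (fst p s) (snd p s)) 0 t)
  end.

Definition picU F1 F2 u0 w0 t := real (Lim_seq (fun n => fst (pic F1 F2 u0 w0 n) t)).
Definition picW F1 F2 u0 w0 t := real (Lim_seq (fun n => snd (pic F1 F2 u0 w0 n) t)).


Lemma pic_cont F1 F2 u0 w0 : contF F1 F2 -> forall n t,
  continuous (fst (pic F1 F2 u0 w0 n)) t /\ continuous (snd (pic F1 F2 u0 w0 n)) t.
Proof.
  intros Hc n. induction n as [|n IH]; intros t.
  - simpl. split; apply continuous_const.
  - simpl. pose proof (Hc _ _ (fun t => proj1 (IH t)) (fun t => proj2 (IH t))) as Hc'.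
    split; eapply der_cont; apply prim_deriv; intros s.
    exact (proj1 (Hc' s)). exact (proj2 (Hc' s)).
Qed.

Lemma pic_der F1 F2 u0 w0 : contF F1 F2 -> forall n t,
  is_derive (fst (pic F1 F2 u0 w0 (S n))) t (F1 t (fst (pic F1 F2 u0 w0 n) t) (snd (pic F1 F2 u0 w0 n) t)) /\
  is_derive (snd (pic F1 F2 u0 w0 (S n))) t (F2 t (fst (pic F1 F2 u0 w0 n) t) (snd (pic F1 F2 u0 w0 n) t)).
Proof.
  intros Hc n t. pose proof (pic_cont F1 F2 u0 w0 Hc n) as IH. simpl.
  pose proof (Hc _ _ (fun t => proj1 (IH t)) (fun t => proj2 (IH t))) as Hc'.
  split.
  apply (prim_deriv (fun s => F1 s (fst (pic F1 F2 u0 w0 n) s) (snd (pic F1 F2 u0 w0 n) s))).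
  intros s. exact (proj1 (Hc' s)).
  apply (prim_deriv (fun s => F2 s (fst (pic F1 F2 u0 w0 n) s) (snd (pic F1 F2 u0 w0 n) s))).
  intros s. exact (proj2 (Hc' s)).
Qed.

Lemma pic_at0 F1 F2 u0 w0 n : fst (pic F1 F2 u0 w0 n) 0 = u0 /\ snd (pic F1 F2 u0 w0 n) 0 = w0.
Proof. destruct n; simpl; auto. split; apply prim_zero. Qed.

Lemma pic_diff F1 F2 u0 w0 L B : 0 < L -> 0 <= B -> lipF F1 F2 L -> contF F1 F2 -> bndF F1 F2 u0 w0 B ->
  forall n t, Rabs (fst (pic F1 F2 u0 w0 (S n)) t - fst (pic F1 F2 u0 w0 n) t)
            + Rabs (snd (pic F1 F2 u0 w0 (S n)) t - snd (pic F1 F2 u0 w0 n) t)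
     <= B / (2 * L) * (1/2) ^ n * exp (2 * L * Rabs t).
Proof.
  intros HL HB Hl Hc Hb n. induction n as [|n IH]; intros t.
  - simpl pow. rewrite Rmult_1_r.
    apply (growth2 (fun s => fst (pic F1 F2 u0 w0 1) s - fst (pic F1 F2 u0 w0 0) s)
                   (fun s => snd (pic F1 F2 u0 w0 1) s - snd (pic F1 F2 u0 w0 0) s)
                   (fun s => F1 s u0 w0 - 0) (fun s => F2 s u0 w0 - 0)); try lra.
    + intros s. apply d_minus. apply (pic_der F1 F2 u0 w0 Hc 0). simpl; apply d_const.
    + intros s. apply d_minus. apply (pic_der F1 F2 u0 w0 Hc 0). simpl; apply d_const.
    + destruct (pic_at0 F1 F2 u0 w0 1). simpl in *. lra.
    + destruct (pic_at0 F1 F2 u0 w0 1). simpl in *. lra.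
    + intros s. rewrite !Rminus_0_r. specialize (Hb s).
      assert (1 <= exp (2 * L * Rabs s)).
      { rewrite <- exp_0. destruct (Req_dec (2 * L * Rabs s) 0) as [->|]. lra.
        left; apply exp_increasing. pose proof (Rabs_pos s). nra. }
      nra.
  - set (pu := fun k => fst (pic F1 F2 u0 w0 k)). set (pw := fun k => snd (pic F1 F2 u0 w0 k)).
    replace (B / (2 * L) * (1 / 2) ^ S n) with ((L * (B / (2 * L) * (1/2)^n)) / (2 * L))
      by (simpl; fld).
    apply (growth2 (fun s => pu (S (S n)) s - pu (S n) s) (fun s => pw (S (S n)) s - pw (S n) s) (fun s => F1 s (pu (S n) s) (pw (S n) s) - F1 s (pu n s) (pw n s))
                       (fun s => F2 s (pu (S n) s) (pw (S n) s) - F2 s (pu n s) (pw n s))); try lra.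
    + pose proof (pow_le (1/2) n). apply Rmult_le_pos. lra. apply Rmult_le_pos; auto.
      apply Rdiv_le_0_compat; lra. lra.
    + intros s. apply d_minus; apply (pic_der F1 F2 u0 w0 Hc).
    + intros s. apply d_minus; apply (pic_der F1 F2 u0 w0 Hc).
    + destruct (pic_at0 F1 F2 u0 w0 (S (S n))). destruct (pic_at0 F1 F2 u0 w0 (S n)). unfold pu, pw in *. lra.
    + destruct (pic_at0 F1 F2 u0 w0 (S (S n))). destruct (pic_at0 F1 F2 u0 w0 (S n)). unfold pu, pw in *. lra.
    + intros s. eapply Rle_trans. apply Hl. rewrite Rmult_assoc. apply Rmult_le_compat_l. lra.
      apply IH.
Qed.

Lemma pic_cauchy F1 F2 u0 w0 L B : 0 < L -> 0 <= B -> lipF F1 F2 L -> contF F1 F2 -> bndF F1 F2 u0 w0 B ->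
  forall n j t, Rabs (fst (pic F1 F2 u0 w0 (n + j)) t - fst (pic F1 F2 u0 w0 n) t)
            + Rabs (snd (pic F1 F2 u0 w0 (n + j)) t - snd (pic F1 F2 u0 w0 n) t)
     <= B / L * (1/2) ^ n * (1 - (1/2)^j) * exp (2 * L * Rabs t).
Proof.
  intros HL HB Hl Hc Hb n j t. induction j as [|j IH].
  - rewrite Nat.add_0_r, !Rminus_diag, Rabs_R0. simpl. lra.
  - replace (n + S j)%nat with (S (n + j)) by lia.
    pose proof (pic_diff F1 F2 u0 w0 L B HL HB Hl Hc Hb (n + j) t) as Hd.
    set (a := fst (pic F1 F2 u0 w0 (S (n + j))) t) in *.
    set (b := fst (pic F1 F2 u0 w0 (n + j)) t) in *.
    set (c := fst (pic F1 F2 u0 w0 n) t) in *.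
    set (a' := snd (pic F1 F2 u0 w0 (S (n + j))) t) in *.
    set (b' := snd (pic F1 F2 u0 w0 (n + j)) t) in *.
    set (c' := snd (pic F1 F2 u0 w0 n) t) in *.
    pose proof (Rabs_triang (a - b) (b - c)). pose proof (Rabs_triang (a' - b') (b' - c')).
    replace (a - b + (b - c)) with (a - c) in * by ring.
    replace (a' - b' + (b' - c')) with (a' - c') in * by ring.
    rewrite pow_add in Hd. simpl pow.
    assert (B / (2 * L) * ((1 / 2) ^ n * (1 / 2) ^ j) * exp (2 * L * Rabs t) =
            B / L * (1 / 2) ^ n * ((1/2) * (1/2)^j) * exp (2 * L * Rabs t)) by fld.
    assert (B / L * (1 / 2) ^ n * (1 - (1/2)^j) * exp (2 * L * Rabs t) +
            B / L * (1 / 2) ^ n * ((1/2) * (1/2)^j) * exp (2 * L * Rabs t) =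
            B / L * (1 / 2) ^ n * (1 - 1 / 2 * (1 / 2) ^ j) * exp (2 * L * Rabs t)) by fld.
    lra.
Qed.

Lemma exp_abs_ge1 c t : 0 <= c -> 1 <= exp (c * Rabs t).
Proof.
  intros Hc. rewrite <- exp_0. destruct (Req_dec (c * Rabs t) 0) as [->|]. lra.
  left; apply exp_increasing. pose proof (Rabs_pos t). nra.
Qed.

Lemma pic_lim F1 F2 u0 w0 L B : 0 < L -> 0 <= B -> lipF F1 F2 L -> contF F1 F2 -> bndF F1 F2 u0 w0 B ->
  forall t, is_lim_seq (fun n => fst (pic F1 F2 u0 w0 n) t) (picU F1 F2 u0 w0 t) /\
            is_lim_seq (fun n => snd (pic F1 F2 u0 w0 n) t) (picW F1 F2 u0 w0 t).
Proof.
  intros HL HB Hl Hc Hb t.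
  set (K := B / L * exp (2 * L * Rabs t)).
  assert (HK : 0 <= K). { unfold K. apply Rmult_le_pos. apply Rdiv_le_0_compat; lra. left; apply exp_pos. }
  assert (Hcau : forall eps : posreal, exists N, forall n m, (N <= n)%nat -> (N <= m)%nat ->
     Rabs (fst (pic F1 F2 u0 w0 n) t - fst (pic F1 F2 u0 w0 m) t) < eps /\
     Rabs (snd (pic F1 F2 u0 w0 n) t - snd (pic F1 F2 u0 w0 m) t) < eps).
  { intros eps. destruct (pow_lt_1_zero (1/2)) with (y := eps / (K + 1)) as [N HN].
    rewrite Rabs_right; lra. apply Rdiv_lt_0_compat. apply cond_pos. lra.
    exists N. intros n m Hn Hm.
    assert (Hgen : forall n m, (N <= n)%nat -> (n <= m)%nat ->
      Rabs (fst (pic F1 F2 u0 w0 m) t - fst (pic F1 F2 u0 w0 n) t) < eps /\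
      Rabs (snd (pic F1 F2 u0 w0 m) t - snd (pic F1 F2 u0 w0 n) t) < eps).
    { clear n m Hn Hm. intros n m Hn Hnm. replace m with (n + (m - n))%nat by lia.
      pose proof (pic_cauchy F1 F2 u0 w0 L B HL HB Hl Hc Hb n (m - n) t) as H.
      specialize (HN n Hn). rewrite Rabs_right in HN by (left; apply pow_lt; lra).
      assert (Hp : 0 < (1/2)^(m-n)) by (apply pow_lt; lra).
      assert (Hq : 0 < (1/2)^n) by (apply pow_lt; lra).
      assert (B / L * (1 / 2) ^ n * (1 - (1 / 2) ^ (m - n)) * exp (2 * L * Rabs t) <= K * (1/2)^n).
      { unfold K. assert (0 <= B / L) by (apply Rdiv_le_0_compat; lra). pose proof (exp_pos (2 * L * Rabs t)).
        assert (0 <= B / L * (1/2)^n * exp (2 * L * Rabs t)) by (apply Rmult_le_pos; [apply Rmult_le_pos|]; lra).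
        nra. }
      assert (K * (1/2)^n < eps).
      { apply Rle_lt_trans with ((K+1) * (1/2)^n). nra.
        apply Rmult_lt_reg_r with (/ (K+1)). apply Rinv_0_lt_compat; lra.
        replace ((K + 1) * (1 / 2) ^ n * / (K + 1)) with ((1/2)^n) by fld. exact HN. }
      pose proof (Rabs_pos (fst (pic F1 F2 u0 w0 (n + (m - n))) t - fst (pic F1 F2 u0 w0 n) t)).
      pose proof (Rabs_pos (snd (pic F1 F2 u0 w0 (n + (m - n))) t - snd (pic F1 F2 u0 w0 n) t)).
      split; lra. }
    destruct (Nat.le_ge_cases n m) as [Hnm|Hnm].
    - destruct (Hgen n m Hn Hnm) as [A1 A2]. split; rewrite Rabs_minus_sym; auto.
    - apply (Hgen m n Hm Hnm). }
  split.
  - assert (Hex : ex_finite_lim_seq (fun n => fst (pic F1 F2 u0 w0 n) t)).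
    { apply ex_lim_seq_cauchy_corr. intros eps. destruct (Hcau eps) as [N HN]. exists N.
      intros n m Hn Hm. apply (HN n m Hn Hm). }
    destruct Hex as [l Hlim]. unfold picU. rewrite (is_lim_seq_unique _ _ Hlim). exact Hlim.
  - assert (Hex : ex_finite_lim_seq (fun n => snd (pic F1 F2 u0 w0 n) t)).
    { apply ex_lim_seq_cauchy_corr. intros eps. destruct (Hcau eps) as [N HN]. exists N.
      intros n m Hn Hm. apply (HN n m Hn Hm). }
    destruct Hex as [l Hlim]. unfold picW. rewrite (is_lim_seq_unique _ _ Hlim). exact Hlim.
Qed.

Lemma pic_bound F1 F2 u0 w0 L B : 0 < L -> 0 <= B -> lipF F1 F2 L -> contF F1 F2 -> bndF F1 F2 u0 w0 B ->
  forall n t, Rabs (picU F1 F2 u0 w0 t - fst (pic F1 F2 u0 w0 n) t) +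
              Rabs (picW F1 F2 u0 w0 t - snd (pic F1 F2 u0 w0 n) t)
              <= B / L * (1/2)^n * exp (2 * L * Rabs t).
Proof.
  intros HL HB Hl Hc Hb n t.
  destruct (pic_lim F1 F2 u0 w0 L B HL HB Hl Hc Hb t) as [H1 H2].
  apply (is_lim_seq_incr_n _ n) in H1. apply (is_lim_seq_incr_n _ n) in H2.
  assert (Hlim : is_lim_seq (fun j => Rabs (fst (pic F1 F2 u0 w0 (j + n)) t - fst (pic F1 F2 u0 w0 n) t) +
                                       Rabs (snd (pic F1 F2 u0 w0 (j + n)) t - snd (pic F1 F2 u0 w0 n) t))
            (Rabs (picU F1 F2 u0 w0 t - fst (pic F1 F2 u0 w0 n) t) +
             Rabs (picW F1 F2 u0 w0 t - snd (pic F1 F2 u0 w0 n) t))).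
  { apply is_lim_seq_plus'.
    apply (is_lim_seq_abs _ (picU F1 F2 u0 w0 t - fst (pic F1 F2 u0 w0 n) t)).
    apply is_lim_seq_minus'. exact H1. apply is_lim_seq_const.
    apply (is_lim_seq_abs _ (picW F1 F2 u0 w0 t - snd (pic F1 F2 u0 w0 n) t)).
    apply is_lim_seq_minus'. exact H2. apply is_lim_seq_const. }
  assert (Hbd : forall j, Rabs (fst (pic F1 F2 u0 w0 (j + n)) t - fst (pic F1 F2 u0 w0 n) t) +
     Rabs (snd (pic F1 F2 u0 w0 (j + n)) t - snd (pic F1 F2 u0 w0 n) t) <= B / L * (1/2)^n * exp (2 * L * Rabs t)).
  { intros j. rewrite Nat.add_comm.
    eapply Rle_trans. apply (pic_cauchy F1 F2 u0 w0 L B HL HB Hl Hc Hb n j t).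
    assert (0 <= B / L) by (apply Rdiv_le_0_compat; lra). pose proof (exp_pos (2 * L * Rabs t)).
    assert (0 <= B / L * (1/2)^n * exp (2 * L * Rabs t)) by (apply Rmult_le_pos; [apply Rmult_le_pos|]; try lra; apply pow_le; lra).
    assert (0 < (1/2)^j) by (apply pow_lt; lra). nra. }
  pose proof (is_lim_seq_le _ _ _ _ Hbd Hlim (is_lim_seq_const (B / L * (1/2)^n * exp (2 * L * Rabs t)))) as Hle.
  simpl in Hle. exact Hle.
Qed.

Lemma unif_lim_cont (f : R -> R) (fn : nat -> R -> R) t K : 0 <= K ->
  (forall n, continuous (fn n) t) ->
  (forall n y, Rabs (y - t) < 1 -> Rabs (f y - fn n y) <= K * (1/2)^n) -> continuous f t.
Proof.
  intros HK Hc Hb. apply cont_of_eps. intros eps He.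
  destruct (pow_lt_1_zero (1/2)) with (y := eps / 3 / (K + 1)) as [N HN].
  rewrite Rabs_right; lra. apply Rdiv_lt_0_compat; lra.
  specialize (HN N (le_n N)). rewrite Rabs_right in HN by (left; apply pow_lt; lra).
  assert (HKN : K * (1/2)^N < eps / 3).
  { pose proof (pow_lt (1/2) N). apply Rle_lt_trans with ((K+1) * (1/2)^N). nra.
    apply Rmult_lt_reg_r with (/ (K+1)). apply Rinv_0_lt_compat; lra.
    replace ((K + 1) * (1 / 2) ^ N * / (K + 1)) with ((1/2)^N) by fld. exact HN. }
  destruct (eps_of_cont (fn N) t (Hc N) (eps / 3)) as [d [Hd Hy]]. lra.
  exists (Rmin 1 d). split. apply Rmin_case; lra.
  intros y Hyt. assert (Rabs (y - t) < 1) by (eapply Rlt_le_trans; [apply Hyt| apply Rmin_l]).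
  assert (Rabs (y - t) < d) by (eapply Rlt_le_trans; [apply Hyt| apply Rmin_r]).
  pose proof (Hb N y H) as Q1. assert (Q2 : Rabs (t - t) < 1) by (rewrite Rminus_diag, Rabs_R0; lra).
  pose proof (Hb N t Q2) as Q3. pose proof (Hy y H0) as Q4.
  replace (f y - f t) with ((f y - fn N y) + (fn N y - fn N t) - (f t - fn N t)) by ring.
  pose proof (Rabs_triang (f y - fn N y + (fn N y - fn N t)) (- (f t - fn N t))) as T1.
  pose proof (Rabs_triang (f y - fn N y) (fn N y - fn N t)) as T2. rewrite Rabs_Ropp in T1.
  unfold Rminus at 1. lra.
Qed.

Lemma picUW_cont F1 F2 u0 w0 L B : 0 < L -> 0 <= B -> lipF F1 F2 L -> contF F1 F2 -> bndF F1 F2 u0 w0 B ->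
  forall t, continuous (picU F1 F2 u0 w0) t /\ continuous (picW F1 F2 u0 w0) t.
Proof.
  intros HL HB Hl Hc Hb t.
  set (K := B / L * exp (2 * L * (Rabs t + 1))).
  assert (HK : 0 <= K). { unfold K. apply Rmult_le_pos. apply Rdiv_le_0_compat; lra. left; apply exp_pos. }
  assert (Hbd : forall n y, Rabs (y - t) < 1 ->
    Rabs (picU F1 F2 u0 w0 y - fst (pic F1 F2 u0 w0 n) y) + Rabs (picW F1 F2 u0 w0 y - snd (pic F1 F2 u0 w0 n) y) <= K * (1/2)^n).
  { intros n y Hy. eapply Rle_trans. apply (pic_bound F1 F2 u0 w0 L B); auto.
    unfold K. assert (exp (2 * L * Rabs y) <= exp (2 * L * (Rabs t + 1))).
    { destruct (Req_dec (Rabs y) (Rabs t + 1)) as [->|]. lra. left. apply exp_increasing.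
      pose proof (Rabs_triang_inv y t). assert (Rabs y < Rabs t + 1) by lra. nra. }
    assert (0 <= B / L) by (apply Rdiv_le_0_compat; lra). pose proof (pow_lt (1/2) n).
    assert (0 < 1/2) by lra. specialize (H1 H2). clear H2.
    assert (0 <= B / L * (1/2)^n) by (apply Rmult_le_pos; lra). nra. }
  split.
  - apply (unif_lim_cont _ (fun n => fst (pic F1 F2 u0 w0 n)) t K HK).
    intros n. apply (pic_cont F1 F2 u0 w0 Hc n t).
    intros n y Hy. specialize (Hbd n y Hy). pose proof (Rabs_pos (picW F1 F2 u0 w0 y - snd (pic F1 F2 u0 w0 n) y)). lra.
  - apply (unif_lim_cont _ (fun n => snd (pic F1 F2 u0 w0 n)) t K HK).
    intros n. apply (pic_cont F1 F2 u0 w0 Hc n t).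
    intros n y Hy. specialize (Hbd n y Hy). pose proof (Rabs_pos (picU F1 F2 u0 w0 y - fst (pic F1 F2 u0 w0 n) y)). lra.
Qed.

Theorem picard F1 F2 u0 w0 L B : 0 < L -> 0 <= B -> lipF F1 F2 L -> contF F1 F2 -> bndF F1 F2 u0 w0 B ->
  (forall t, is_derive (picU F1 F2 u0 w0) t (F1 t (picU F1 F2 u0 w0 t) (picW F1 F2 u0 w0 t))) /\
  (forall t, is_derive (picW F1 F2 u0 w0) t (F2 t (picU F1 F2 u0 w0 t) (picW F1 F2 u0 w0 t))) /\
  picU F1 F2 u0 w0 0 = u0 /\ picW F1 F2 u0 w0 0 = w0.
Proof.
  intros HL HB Hl Hc Hb.
  set (U := picU F1 F2 u0 w0). set (W := picW F1 F2 u0 w0).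
  assert (HUc : forall t, continuous U t) by (intros; apply (picUW_cont F1 F2 u0 w0 L B); auto).
  assert (HWc : forall t, continuous W t) by (intros; apply (picUW_cont F1 F2 u0 w0 L B); auto).
  set (f := fun s => F1 s (U s) (W s)). set (g := fun s => F2 s (U s) (W s)).
  assert (Hfc : forall t, continuous f t) by (intros; apply (Hc U W HUc HWc)).
  assert (Hgc : forall t, continuous g t) by (intros; apply (Hc U W HUc HWc)).
  assert (Hint : forall t, U t = u0 + RInt f 0 t /\ W t = w0 + RInt g 0 t).
  { intros t.
    assert (Hn : forall n, Rabs (U t - (u0 + RInt f 0 t)) + Rabs (W t - (w0 + RInt g 0 t))
                  <= B / L * exp (2 * L * Rabs t) * (1/2)^n).
    { intros n.
      set (fn := fun s => F1 s (fst (pic F1 F2 u0 w0 n) s) (snd (pic F1 F2 u0 w0 n) s)).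
      set (gn := fun s => F2 s (fst (pic F1 F2 u0 w0 n) s) (snd (pic F1 F2 u0 w0 n) s)).
      pose proof (pic_cont F1 F2 u0 w0 Hc n) as Hpc.
      assert (Hfn : forall t, continuous fn t) by (intros; apply (Hc _ _ (fun t => proj1 (Hpc t)) (fun t => proj2 (Hpc t)))).
      assert (Hgn : forall t, continuous gn t) by (intros; apply (Hc _ _ (fun t => proj1 (Hpc t)) (fun t => proj2 (Hpc t)))).
      assert (E1 : fst (pic F1 F2 u0 w0 (S n)) t = u0 + RInt fn 0 t) by reflexivity.
      assert (E2 : snd (pic F1 F2 u0 w0 (S n)) t = w0 + RInt gn 0 t) by reflexivity.
      pose proof (pic_bound F1 F2 u0 w0 L B HL HB Hl Hc Hb (S n) t) as PB. rewrite E1, E2 in PB.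
      assert (G : Rabs ((0 + RInt fn 0 t) - (0 + RInt f 0 t)) + Rabs ((0 + RInt gn 0 t) - (0 + RInt g 0 t))
                  <= (B * (1/2)^n) / (2 * L) * exp (2 * L * Rabs t)).
      { apply (growth2 (fun t => (0 + RInt fn 0 t) - (0 + RInt f 0 t)) (fun t => (0 + RInt gn 0 t) - (0 + RInt g 0 t))
                       (fun s => fn s - f s) (fun s => gn s - g s)).
        lra. apply Rmult_le_pos. lra. apply pow_le; lra.
        intros s. apply d_minus; apply prim_deriv; auto.
        intros s. apply d_minus; apply prim_deriv; auto.
        rewrite !prim_zero; ring. rewrite !prim_zero; ring.
        intros s. unfold fn, gn, f, g. eapply Rle_trans. apply Hl.
        rewrite (Rabs_minus_sym _ (U s)), (Rabs_minus_sym _ (W s)).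
        eapply Rle_trans. apply Rmult_le_compat_l. lra. apply (pic_bound F1 F2 u0 w0 L B HL HB Hl Hc Hb n s).
        right. fld. }
      replace (U t - (u0 + RInt f 0 t)) with ((U t - (u0 + RInt fn 0 t)) + ((0 + RInt fn 0 t) - (0 + RInt f 0 t))) by ring.
      replace (W t - (w0 + RInt g 0 t)) with ((W t - (w0 + RInt gn 0 t)) + ((0 + RInt gn 0 t) - (0 + RInt g 0 t))) by ring.
      pose proof (Rabs_triang (U t - (u0 + RInt fn 0 t)) ((0 + RInt fn 0 t) - (0 + RInt f 0 t))).
      pose proof (Rabs_triang (W t - (w0 + RInt gn 0 t)) ((0 + RInt gn 0 t) - (0 + RInt g 0 t))).
      replace (B / L * exp (2 * L * Rabs t) * (1 / 2) ^ n) with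
        (B / L * (1 / 2) ^ S n * exp (2 * L * Rabs t) + B * (1 / 2) ^ n / (2 * L) * exp (2 * L * Rabs t))
        by (simpl; fld).
      fold U W in PB. lra. }
    assert (0 <= B / L * exp (2 * L * Rabs t)).
    { apply Rmult_le_pos. apply Rdiv_le_0_compat; lra. left; apply exp_pos. }
    split; apply Rminus_diag_uniq; apply (small_zero _ (B / L * exp (2 * L * Rabs t))); auto; intros n;
    specialize (Hn n); pose proof (Rabs_pos (U t - (u0 + RInt f 0 t))); pose proof (Rabs_pos (W t - (w0 + RInt g 0 t))); lra. }
  split; [|split; [|split]].
  - intros t. apply (d_ext (fun t => u0 + RInt f 0 t) _ t (f t)). intros; symmetry; apply Hint. reflexivity.
    apply prim_deriv; auto.
  - intros t. apply (d_ext (fun t => w0 + RInt g 0 t) _ t (g t)). intros; symmetry; apply Hint. reflexivity.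
    apply prim_deriv; auto.
  - destruct (Hint 0) as [H _]. rewrite H, prim_zero. reflexivity.
  - destruct (Hint 0) as [_ H]. rewrite H, prim_zero. reflexivity.
Qed.

Definition psi eta x := Rmin 1 (Rmax 0 ((x - eta) / eta)).
Definition phi eta x := 2 * eta + RInt (psi eta) (2 * eta) x.

Lemma clamp_lip a b : Rabs (Rmin 1 (Rmax 0 a) - Rmin 1 (Rmax 0 b)) <= Rabs (a - b).
Proof. unfold Rmin, Rmax; repeat destruct Rle_dec; unfold Rabs; repeat destruct Rcase_abs; lra. Qed.

Lemma psi_range eta x : 0 <= psi eta x <= 1.
Proof. unfold psi, Rmin, Rmax; repeat destruct Rle_dec; lra. Qed.

Lemma psi_low eta x : 0 < eta -> x <= eta -> psi eta x = 0.
Proof.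
  intros He Hx. unfold psi. assert ((x - eta) / eta <= 0).
  { unfold Rdiv. assert (0 < / eta) by (apply Rinv_0_lt_compat; lra). nra. }
  unfold Rmin, Rmax; repeat destruct Rle_dec; lra.
Qed.

Lemma psi_high eta x : 0 < eta -> 2 * eta <= x -> psi eta x = 1.
Proof.
  intros He Hx. unfold psi. assert (1 <= (x - eta) / eta).
  { apply Rmult_le_reg_r with eta. lra. unfold Rdiv. rewrite Rmult_assoc, Rinv_l by lra. lra. }
  unfold Rmin, Rmax; repeat destruct Rle_dec; lra.
Qed.

Lemma psi_lip eta x y : 0 < eta -> Rabs (psi eta x - psi eta y) <= / eta * Rabs (x - y).
Proof.
  intros He. unfold psi. eapply Rle_trans. apply clamp_lip.
  replace ((x - eta) / eta - (y - eta) / eta) with (/ eta * (x - y)) by fld.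
  rewrite Rabs_mult, Rabs_right. lra. left; apply Rinv_0_lt_compat; lra.
Qed.

Lemma psi_cont eta x : 0 < eta -> continuous (psi eta) x.
Proof.
  intros He. apply (lip_cont _ (/ eta)). left; apply Rinv_0_lt_compat; lra.
  intros y. apply psi_lip; auto.
Qed.

Lemma phi_der eta x : 0 < eta -> is_derive (phi eta) x (psi eta x).
Proof. intros He. apply (prim_deriv_a (psi eta) (2 * eta) (2 * eta)). intros; apply psi_cont; auto. Qed.

Lemma phi_2eta eta : phi eta (2 * eta) = 2 * eta.
Proof. unfold phi. rewrite RInt_point. unfold zero; simpl. ring. Qed.

Lemma phi_mono eta x y : 0 < eta -> x <= y -> phi eta x <= phi eta y.
Proof.
  intros He Hxy. apply (deriv_le _ (psi eta)); auto.
  intros; apply phi_der; auto. intros; apply psi_range.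
Qed.

Lemma phi_id eta x : 0 < eta -> 2 * eta <= x -> phi eta x = x.
Proof.
  intros He Hx. assert (phi eta (2 * eta) - 2 * eta = phi eta x - x); [|rewrite phi_2eta in H; lra].
  apply (deriv_const (fun s => phi eta s - s) (fun s => psi eta s - 1) (2 * eta) x); auto.
  intros s Hs. apply d_minus. apply phi_der; auto. apply d_id.
  intros s Hs. rewrite psi_high; auto; lra.
Qed.

Lemma phi_ge eta x : 0 < eta -> eta <= phi eta x.
Proof.
  intros He.
  assert (H1 : eta <= phi eta eta).
  { destruct (mvt (phi eta) (psi eta) eta (2 * eta)) as [c [Hc E]]. lra.
    intros; apply phi_der; auto.
    rewrite phi_2eta in E. pose proof (psi_range eta c). nra. }
  destruct (Rle_dec eta x).
  - pose proof (phi_mono eta eta x He r). lra.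
  - assert (phi eta x = phi eta eta); [|lra].
    apply (deriv_const (phi eta) (psi eta) x eta). lra. intros; apply phi_der; auto.
    intros s Hs. apply psi_low; lra.
Qed.

Lemma phi_le2 eta x : 0 < eta -> x <= 2 * eta -> phi eta x <= 2 * eta.
Proof. intros He Hx. pose proof (phi_mono eta x (2 * eta) He Hx). rewrite phi_2eta in H. exact H. Qed.

Lemma phi_lip eta x y : 0 < eta -> Rabs (phi eta x - phi eta y) <= Rabs (x - y).
Proof.
  intros He. rewrite <- (Rmult_1_l (Rabs (x - y))).
  apply (lip_of_der (phi eta) (psi eta) 1 (Rmin x y) (Rmax x y)).
  split; [apply Rmin_l|apply Rmax_l]. split; [apply Rmin_r|apply Rmax_r].
  intros; apply phi_der; auto.
  intros s _. pose proof (psi_range eta s). rewrite Rabs_right; lra.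
Qed.

Lemma phi_bnd eta x R0 : 0 < eta -> Rabs x <= R0 -> eta <= phi eta x <= Rmax R0 (2 * eta).
Proof.
  intros He Hx. split. apply phi_ge; auto.
  destruct (Rle_dec x (2 * eta)).
  - eapply Rle_trans. apply phi_le2; auto. apply Rmax_r.
  - rewrite phi_id by lra. eapply Rle_trans; [|apply Rmax_l]. pose proof (Rle_abs x). lra.
Qed.

Definition Dp (delta : R -> R) rB x := RInt delta rB x.
Definition g1 delta rB eta x := Dp delta rB (phi eta x).
Definition dg1 (delta : R -> R) eta x := delta (phi eta x) * psi eta x.
Definition g2 eta x := - / (phi eta x ^ 2).
Definition dg2 eta x := 2 * psi eta x / (phi eta x ^ 3).

Lemma delta_cont (delta : R -> R) x : (forall x, 0 < x -> ex_derive delta x) -> 0 < x -> continuous delta x.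
Proof. intros H Hx. destruct (H x Hx) as [l Hl]. eapply der_cont; eauto. Qed.

Lemma Dp_der delta rB x : (forall x, 0 < x -> ex_derive delta x) -> 0 < rB -> 0 < x ->
  is_derive (Dp delta rB) x (delta x).
Proof.
  intros Hd HrB Hx. unfold Dp. apply (is_derive_RInt delta (RInt delta rB) rB x).
  - exists (mkposreal (x / 2) ltac:(lra)). intros b Hb.
    unfold ball in Hb; simpl in Hb; unfold AbsRing_ball, abs, minus, plus, opp in Hb; simpl in Hb.
    apply Rabs_def2 in Hb.
    apply (@RInt_correct R_CompleteNormedModule), (@ex_RInt_continuous R_CompleteNormedModule).
    intros z Hz. apply delta_cont; auto.
    assert (0 < Rmin rB b) by (apply Rmin_case; lra). lra.
  - apply delta_cont; auto.
Qed.

Lemma Dp_rB delta rB : Dp delta rB rB = 0.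
Proof. unfold Dp. rewrite RInt_point. reflexivity. Qed.

Lemma g1_der delta rB eta x : (forall x, 0 < x -> ex_derive delta x) -> 0 < rB -> 0 < eta ->
  is_derive (g1 delta rB eta) x (dg1 delta eta x).
Proof.
  intros Hd HrB He. unfold g1, dg1. eapply d_val; [|apply (d_comp (Dp delta rB) (phi eta))].
  apply Rmult_comm. apply Dp_der; auto. pose proof (phi_ge eta x He); lra. apply phi_der; auto.
Qed.

Lemma g2_der eta x : 0 < eta -> is_derive (g2 eta) x (dg2 eta x).
Proof.
  intros He. pose proof (phi_ge eta x He).
  unfold g2, dg2. eapply d_val; [|apply (d_comp (fun y => - / y ^ 2) (phi eta))].
  2: { auto_derive. intro Z; nra. reflexivity. }
  2: apply phi_der; auto.
  simpl. field. intro Z; nra.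
Qed.

Lemma dg1_bnd delta eta M x : (forall x, 0 < x -> 0 <= delta x) -> (forall x, 0 < x -> delta x <= M) -> 0 < eta ->
  0 <= dg1 delta eta x <= M.
Proof.
  intros H0 HM He. unfold dg1. pose proof (phi_ge eta x He). pose proof (psi_range eta x).
  pose proof (H0 (phi eta x) ltac:(lra)). pose proof (HM (phi eta x) ltac:(lra)). split; nra.
Qed.

Lemma dg2_bnd eta x : 0 < eta -> 0 <= dg2 eta x <= 2 / eta ^ 3.
Proof.
  intros He. unfold dg2. pose proof (phi_ge eta x He). pose proof (psi_range eta x).
  assert (0 < eta ^ 3) by (apply pow_lt; lra).
  assert (eta ^ 3 <= phi eta x ^ 3) by (apply pow_incr; lra).
  split. apply Rdiv_le_0_compat. lra. lra.
  unfold Rdiv. apply Rmult_le_compat. lra. left; apply Rinv_0_lt_compat; lra. lra.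
  apply Rinv_le_contravar; lra.
Qed.

Lemma g2_bnd eta x : 0 < eta -> - / eta ^ 2 <= g2 eta x < 0.
Proof.
  intros He. unfold g2. pose proof (phi_ge eta x He).
  assert (0 < eta ^ 2) by (apply pow_lt; lra).
  assert (eta ^ 2 <= phi eta x ^ 2) by (apply pow_incr; lra).
  assert (0 < / phi eta x ^ 2) by (apply Rinv_0_lt_compat; lra).
  split. apply Ropp_le_contravar. apply Rinv_le_contravar; lra. lra.
Qed.

Lemma g1_lip delta rB eta M x y : (forall x, 0 < x -> ex_derive delta x) -> (forall x, 0 < x -> 0 <= delta x) ->
  (forall x, 0 < x -> delta x <= M) -> 0 < rB -> 0 < eta ->
  Rabs (g1 delta rB eta x - g1 delta rB eta y) <= M * Rabs (x - y).
Proof.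
  intros Hd H0 HM HrB He. apply (lip_of_der _ (dg1 delta eta) M (Rmin x y) (Rmax x y)).
  split; [apply Rmin_l|apply Rmax_l]. split; [apply Rmin_r|apply Rmax_r].
  intros; apply g1_der; auto.
  intros s _. pose proof (dg1_bnd delta eta M s H0 HM He). rewrite Rabs_right; lra.
Qed.

Lemma g2_lip eta x y : 0 < eta -> Rabs (g2 eta x - g2 eta y) <= 2 / eta ^ 3 * Rabs (x - y).
Proof.
  intros He. apply (lip_of_der _ (dg2 eta) (2 / eta ^ 3) (Rmin x y) (Rmax x y)).
  split; [apply Rmin_l|apply Rmax_l]. split; [apply Rmin_r|apply Rmax_r].
  intros; apply g2_der; auto.
  intros s _. pose proof (dg2_bnd eta s He). rewrite Rabs_right; lra.
Qed.

Lemma phi_cont eta x : 0 < eta -> continuous (phi eta) x.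
Proof. intros He. eapply der_cont. apply phi_der; auto. Qed.

Lemma dg1_cont delta eta x : (forall x, 0 < x -> ex_derive delta x) -> 0 < eta -> continuous (dg1 delta eta) x.
Proof.
  intros Hd He. unfold dg1. apply (continuous_mult (fun x => delta (phi eta x)) (psi eta)).
  apply (continuous_comp (phi eta) delta). apply phi_cont; auto. apply delta_cont; auto.
  pose proof (phi_ge eta x He); lra. apply psi_cont; auto.
Qed.

Lemma dg2_cont eta x : 0 < eta -> continuous (dg2 eta) x.
Proof.
  intros He. unfold dg2. pose proof (phi_ge eta x He).
  apply (continuous_mult (fun x => 2 * psi eta x) (fun x => / phi eta x ^ 3)).
  apply (continuous_mult (fun _ => 2) (psi eta)). apply continuous_const. apply psi_cont; auto.
  apply (continuous_comp (phi eta) (fun y => / y ^ 3)). apply phi_cont; auto.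
  eapply der_cont. auto_derive. intro Z. assert (0 < phi eta x * phi eta x) by nra. nra. reflexivity.
Qed.

Lemma delta_lip_on delta a b : (forall x, 0 < x -> ex_derive delta x) ->
  (forall x, 0 < x -> continuous (Derive delta) x) -> 0 < a -> a <= b ->
  exists K, 0 <= K /\ forall x y, a <= x <= b -> a <= y <= b -> Rabs (delta x - delta y) <= K * Rabs (x - y).
Proof.
  intros Hd Hdc Ha Hab.
  destruct (continuity_ab_maj (fun x => Rabs (Derive delta x)) a b Hab) as [m [Hm _]].
  { intros c Hc. apply continuity_pt_filterlim. apply (continuous_Rabs_comp (Derive delta)). apply Hdc; lra. }
  exists (Rabs (Derive delta m)). split. apply Rabs_pos.
  intros x y Hx Hy. apply (lip_of_der delta (Derive delta) _ a b); auto.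
  intros s Hs. apply Derive_correct, Hd; lra.
Qed.

Lemma dg1_lip delta eta M R0 : (forall x, 0 < x -> ex_derive delta x) ->
  (forall x, 0 < x -> continuous (Derive delta) x) -> (forall x, 0 < x -> 0 <= delta x) ->
  (forall x, 0 < x -> delta x <= M) -> 0 < eta ->
  exists K, 0 <= K /\ forall x y, Rabs x <= R0 -> Rabs y <= R0 ->
    Rabs (dg1 delta eta x - dg1 delta eta y) <= K * Rabs (x - y).
Proof.
  intros Hd Hdc H0 HM He.
  destruct (delta_lip_on delta eta (Rmax R0 (2 * eta)) Hd Hdc He) as [Kd [HKd Hl]].
  { eapply Rle_trans; [|apply Rmax_r]. lra. }
  assert (HM0 : 0 <= M) by (pose proof (H0 eta He); pose proof (HM eta He); lra).
  exists (Kd + M / eta). split. assert (0 <= M / eta) by (apply Rdiv_le_0_compat; lra). lra.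
  intros x y Hx Hy. unfold dg1.
  pose proof (phi_bnd eta x R0 He Hx). pose proof (phi_bnd eta y R0 He Hy).
  replace (delta (phi eta x) * psi eta x - delta (phi eta y) * psi eta y) with
    ((delta (phi eta x) - delta (phi eta y)) * psi eta x + delta (phi eta y) * (psi eta x - psi eta y)) by ring.
  eapply Rle_trans. apply Rabs_triang. rewrite !Rabs_mult.
  pose proof (Hl _ _ H H1). pose proof (phi_lip eta x y He). pose proof (psi_lip eta x y He).
  pose proof (psi_range eta x). rewrite (Rabs_right (psi eta x)) by lra.
  pose proof (H0 (phi eta y) ltac:(lra)). pose proof (HM (phi eta y) ltac:(lra)).
  rewrite (Rabs_right (delta (phi eta y))) by lra.
  pose proof (Rabs_pos (delta (phi eta x) - delta (phi eta y))). pose proof (Rabs_pos (psi eta x - psi eta y)).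
  pose proof (Rabs_pos (x - y)).
  assert (Rabs (delta (phi eta x) - delta (phi eta y)) * psi eta x <= Kd * Rabs (x - y)).
  { apply Rle_trans with (Rabs (delta (phi eta x) - delta (phi eta y))). nra. nra. }
  assert (delta (phi eta y) * Rabs (psi eta x - psi eta y) <= M / eta * Rabs (x - y)).
  { apply Rle_trans with (M * (/ eta * Rabs (x - y))). apply Rmult_le_compat; lra. unfold Rdiv. lra. }
  lra.
Qed.

Lemma inv3_lip eta a b : 0 < eta -> eta <= a -> eta <= b -> Rabs (/ a ^ 3 - / b ^ 3) <= 3 / eta ^ 4 * Rabs (a - b).
Proof.
  intros He Ha Hb. apply (lip_of_der (fun y => / y ^ 3) (fun y => - 3 / y ^ 4) _ (Rmin a b) (Rmax a b)).
  split; [apply Rmin_l|apply Rmax_l]. split; [apply Rmin_r|apply Rmax_r].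
  intros s Hs. assert (eta <= s) by (eapply Rle_trans; [|apply Hs]; apply Rmin_case; lra).
  auto_derive. intro Z. assert (0 < s * s) by nra. nra. field. lra.
  intros s Hs. assert (eta <= s) by (eapply Rle_trans; [|apply Hs]; apply Rmin_case; lra).
  assert (0 < eta ^ 4) by (apply pow_lt; lra). assert (eta ^ 4 <= s ^ 4) by (apply pow_incr; lra).
  replace (-3 / s ^ 4) with (- (3 * / s ^ 4)) by (field; intro Z; nra).
  rewrite Rabs_Ropp, Rabs_right. unfold Rdiv.
  apply Rmult_le_compat_l. lra. apply Rinv_le_contravar; lra.
  assert (0 < / s ^ 4) by (apply Rinv_0_lt_compat; lra). lra.
Qed.

Lemma dg2_lip eta x y : 0 < eta -> Rabs (dg2 eta x - dg2 eta y) <= 8 / eta ^ 4 * Rabs (x - y).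
Proof.
  intros He. unfold dg2. pose proof (phi_ge eta x He). pose proof (phi_ge eta y He).
  replace (2 * psi eta x / phi eta x ^ 3 - 2 * psi eta y / phi eta y ^ 3) with
    (2 * ((psi eta x - psi eta y) * / phi eta x ^ 3 + psi eta y * (/ phi eta x ^ 3 - / phi eta y ^ 3))).
  2: { field; repeat split; intro Z; nra. }
  rewrite Rabs_mult, (Rabs_right 2) by lra.
  pose proof (Rabs_triang ((psi eta x - psi eta y) * / phi eta x ^ 3) (psi eta y * (/ phi eta x ^ 3 - / phi eta y ^ 3))).
  rewrite !Rabs_mult in H1.
  pose proof (psi_lip eta x y He). pose proof (psi_range eta y). pose proof (inv3_lip eta _ _ He H H0).
  pose proof (phi_lip eta x y He).
  assert (0 < eta ^ 3) by (apply pow_lt; lra). assert (eta ^ 3 <= phi eta x ^ 3) by (apply pow_incr; lra).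
  assert (Hi : Rabs (/ phi eta x ^ 3) <= / eta ^ 3).
  { rewrite Rabs_right. apply Rinv_le_contravar; lra. left; apply Rinv_0_lt_compat; lra. }
  rewrite (Rabs_right (psi eta y)) in H1 by lra.
  pose proof (Rabs_pos (psi eta x - psi eta y)). pose proof (Rabs_pos (/ phi eta x ^ 3 - / phi eta y ^ 3)).
  pose proof (Rabs_pos (x - y)). pose proof (Rabs_pos (/ phi eta x ^ 3)).
  assert (A1 : Rabs (psi eta x - psi eta y) * Rabs (/ phi eta x ^ 3) <= (/ eta * Rabs (x - y)) * / eta ^ 3).
  { apply Rmult_le_compat; lra. }
  assert (A2 : psi eta y * Rabs (/ phi eta x ^ 3 - / phi eta y ^ 3) <= 3 / eta ^ 4 * Rabs (x - y)).
  { apply Rle_trans with (1 * (3 / eta ^ 4 * Rabs (phi eta x - phi eta y))). apply Rmult_le_compat; lra.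
    assert (0 <= 3 / eta ^ 4) by (apply Rdiv_le_0_compat; [lra| apply pow_lt; lra]). nra. }
  replace (/ eta * Rabs (x - y) * / eta ^ 3) with (1 / eta ^ 4 * Rabs (x - y)) in A1 by fld.
  replace (8 / eta ^ 4 * Rabs (x - y)) with (2 * (1 / eta ^ 4 * Rabs (x - y) + 3 / eta ^ 4 * Rabs (x - y))) by fld.
  lra.
Qed.

Definition dhyp (delta : R -> R) M :=
  (forall x, 0 < x -> 0 <= delta x) /\ (forall x, 0 < x -> delta x <= M) /\
  (forall x, 0 < x -> ex_derive delta x) /\ (forall x, 0 < x -> continuous (Derive delta) x).

Definition F1s delta rB eta := fun (t u w : R) => w + g1 delta rB eta u.
Definition F2s eta := fun (t u w : R) => g2 eta u.
Definition FU delta rB eta v := picU (F1s delta rB eta) (F2s eta) rB (- v).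
Definition FW delta rB eta v := picW (F1s delta rB eta) (F2s eta) rB (- v).
Definition Ls M eta := 1 + M + 2 / eta ^ 3.

Lemma dhyp_M0 delta M : dhyp delta M -> 0 <= M.
Proof. intros [H0 [HM _]]. pose proof (H0 1 ltac:(lra)). pose proof (HM 1 ltac:(lra)). lra. Qed.

Lemma N_pos eta : 0 < eta -> 0 < 2 / eta ^ 3.
Proof. intros He. apply Rdiv_lt_0_compat. lra. apply pow_lt; lra. Qed.

Lemma sys_lip delta rB eta M : dhyp delta M -> 0 < rB -> 0 < eta ->
  lipF (F1s delta rB eta) (F2s eta) (Ls M eta).
Proof.
  intros [H0 [HM [Hd Hdc]]] HrB He t u w u' w'. unfold F1s, F2s, Ls.
  pose proof (g1_lip delta rB eta M u u' Hd H0 HM HrB He). pose proof (g2_lip eta u u' He).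
  replace (w + g1 delta rB eta u - (w' + g1 delta rB eta u')) with ((w - w') + (g1 delta rB eta u - g1 delta rB eta u')) by ring.
  pose proof (Rabs_triang (w - w') (g1 delta rB eta u - g1 delta rB eta u')).
  pose proof (Rabs_pos (u - u')). pose proof (Rabs_pos (w - w')). pose proof (N_pos eta He).
  assert (0 <= M) by (pose proof (H0 1 ltac:(lra)); pose proof (HM 1 ltac:(lra)); lra).
  nra.
Qed.


Lemma sys_cont delta rB eta M : dhyp delta M -> 0 < rB -> 0 < eta -> contF (F1s delta rB eta) (F2s eta).
Proof.
  intros [H0 [HM [Hd Hdc]]] HrB He u w Hu Hw t. unfold F1s, F2s. split.
  - apply (continuous_plus w (fun s => g1 delta rB eta (u s))). auto.
    apply (continuous_comp u (g1 delta rB eta)). auto. eapply der_cont. apply g1_der; auto.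
  - apply (continuous_comp u (g2 eta)). auto. eapply der_cont. apply g2_der; auto.
Qed.

Lemma flow_sol delta rB eta M v : dhyp delta M -> 0 < rB -> 0 < eta ->
  (forall t, is_derive (FU delta rB eta v) t (FW delta rB eta v t + g1 delta rB eta (FU delta rB eta v t))) /\
  (forall t, is_derive (FW delta rB eta v) t (g2 eta (FU delta rB eta v t))) /\
  FU delta rB eta v 0 = rB /\ FW delta rB eta v 0 = - v.
Proof.
  intros Hh HrB He.
  pose proof (dhyp_M0 delta M Hh).
  destruct (picard (F1s delta rB eta) (F2s eta) rB (- v) (Ls M eta)
     (Rabs (F1s delta rB eta 0 rB (-v)) + Rabs (F2s eta 0 rB (-v)))) as [A [B [C D]]].
  unfold Ls; pose proof (N_pos eta He); lra.
  pose proof (Rabs_pos (F1s delta rB eta 0 rB (-v))); pose proof (Rabs_pos (F2s eta 0 rB (-v))); lra.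
  apply sys_lip; auto. eapply sys_cont; eauto.
  intros t. unfold F1s, F2s. lra.
  unfold FU, FW. split; [intros t; apply A|split; [intros t; apply B|split; auto]].
Qed.

Lemma flow_cont delta rB eta M v t : dhyp delta M -> 0 < rB -> 0 < eta -> continuous (FU delta rB eta v) t.
Proof. intros Hh HrB He. eapply der_cont. apply (flow_sol delta rB eta M v Hh HrB He). Qed.

Lemma sqr_le_abs a b : 0 <= b -> a ^ 2 <= b ^ 2 -> Rabs a <= b.
Proof.
  intros Hb H. destruct (Rle_dec (Rabs a) b) as [|Hn]; auto. exfalso.
  assert (b < Rabs a) by lra. assert (Rabs a ^ 2 = a ^ 2) by apply pow2_abs.
  nra.
Qed.

Lemma sys_gron delta rB eta M u1 w1 u2 w2 S : dhyp delta M -> 0 < rB -> 0 < eta ->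
  (forall s, 0 <= s <= S -> is_derive u1 s (w1 s + g1 delta rB eta (u1 s)) /\ is_derive w1 s (g2 eta (u1 s))) ->
  (forall s, 0 <= s <= S -> is_derive u2 s (w2 s + g1 delta rB eta (u2 s)) /\ is_derive w2 s (g2 eta (u2 s))) ->
  forall s, 0 <= s <= S ->
  (u1 s - u2 s) ^ 2 + (w1 s - w2 s) ^ 2 <= ((u1 0 - u2 0) ^ 2 + (w1 0 - w2 0) ^ 2) * exp ((1 + 2 * M + 2 / eta ^ 3) * s).
Proof.
  intros Hh HrB He H1 H2 s Hs.
  destruct Hh as [H0 [HM [Hd Hdc]]].
  assert (HM0 : 0 <= M) by (pose proof (H0 1 ltac:(lra)); pose proof (HM 1 ltac:(lra)); lra).
  pose proof (N_pos eta He) as HN.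
  set (N := 2 / eta ^ 3) in *.
  pose proof (gronwall (fun s => (u1 s - u2 s) ^ 2 + (w1 s - w2 s) ^ 2)
    (fun s => 2 * (u1 s - u2 s) * ((w1 s + g1 delta rB eta (u1 s)) - (w2 s + g1 delta rB eta (u2 s)))
            + 2 * (w1 s - w2 s) * (g2 eta (u1 s) - g2 eta (u2 s)))
    (1 + 2 * M + N) 0 S) as G.
  eapply Rle_trans; [apply G|right; ring]; auto; try lra.
  - intros x Hx. destruct (H1 x Hx) as [A1 B1]. destruct (H2 x Hx) as [A2 B2].
    eapply d_val; [| apply d_plus; apply (d_comp (fun y => y ^ 2)); [| apply d_minus; [apply A1|apply A2] | | apply d_minus; [apply B1|apply B2]]].
    2,3: auto_derive; auto; reflexivity. simpl. ring.
  - intros x Hx. clear G H1 H2.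
    set (a := u1 x - u2 x). set (b := w1 x - w2 x).
    set (c := g1 delta rB eta (u1 x) - g1 delta rB eta (u2 x)). set (d := g2 eta (u1 x) - g2 eta (u2 x)).
    replace (w1 x + g1 delta rB eta (u1 x) - (w2 x + g1 delta rB eta (u2 x))) with (b + c) by (unfold b, c; ring).
    fold d. 
    assert (Hc : Rabs c <= M * Rabs a) by (apply g1_lip; auto).
    assert (Hdd : Rabs d <= N * Rabs a) by (apply g2_lip; auto).
    assert (ac : a * c <= M * a ^ 2).
    { apply Rle_trans with (Rabs a * Rabs c). rewrite <- Rabs_mult. apply Rle_abs.
      replace (a ^ 2) with (Rabs a * Rabs a) by (rewrite <- pow2_abs; simpl; ring).
      pose proof (Rabs_pos a). nra. }
    assert (bd : b * d <= N * Rabs b * Rabs a).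
    { apply Rle_trans with (Rabs b * Rabs d). rewrite <- Rabs_mult. apply Rle_abs.
      pose proof (Rabs_pos b). nra. }
    assert (ab : 2 * (Rabs b * Rabs a) <= a ^ 2 + b ^ 2).
    { replace (a ^ 2) with (Rabs a ^ 2) by apply pow2_abs.
      replace (b ^ 2) with (Rabs b ^ 2) by apply pow2_abs.
      pose proof (pow2_ge_0 (Rabs a - Rabs b)). nra. }
    assert (ab' : a * b <= Rabs b * Rabs a) by (rewrite <- Rabs_mult, Rmult_comm; apply Rle_abs).
    assert (0 <= a ^ 2) by apply pow2_ge_0. assert (0 <= b ^ 2) by apply pow2_ge_0.
    nra.
Qed.

Definition lam M eta := 1 + 2 * M + 2 / eta ^ 3.


Lemma flow_lipdep delta rB eta M v v' s : dhyp delta M -> 0 < rB -> 0 < eta -> 0 <= s ->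
  Rabs (FU delta rB eta v s - FU delta rB eta v' s) <= Rabs (v - v') * exp (lam M eta * s).
Proof.
  intros Hh HrB He Hs.
  destruct (flow_sol delta rB eta M v Hh HrB He) as [A1 [B1 [C1 D1]]].
  destruct (flow_sol delta rB eta M v' Hh HrB He) as [A2 [B2 [C2 D2]]].
  pose proof (sys_gron delta rB eta M _ _ _ _ s Hh HrB He
     (fun x _ => conj (A1 x) (B1 x)) (fun x _ => conj (A2 x) (B2 x)) s (conj Hs (Rle_refl s))) as G.
  rewrite C1, C2, D1, D2 in G. fold (lam M eta) in G. unfold lam in *.
  set (E := exp ((1 + 2 * M + 2 / eta ^ 3) * s)) in *.
  assert (HE : 1 <= E).
  { unfold E. pose proof (dhyp_M0 delta M Hh). pose proof (N_pos eta He).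
    pose proof (exp_ineq1_le ((1 + 2 * M + 2 / eta ^ 3) * s)). nra. }
  apply sqr_le_abs. pose proof (Rabs_pos (v - v')). nra.
  rewrite Rpow_mult_distr, pow2_abs.
  pose proof (pow2_ge_0 (FW delta rB eta v s - FW delta rB eta v' s)).
  replace ((rB - rB) ^ 2 + (- v - - v') ^ 2) with ((v - v') ^ 2) in G by ring.
  pose proof (pow2_ge_0 (v - v')).
  assert ((v - v') ^ 2 * E <= (v - v') ^ 2 * E ^ 2) by (apply Rmult_le_compat_l; [apply pow2_ge_0| simpl; nra]). lra.
Qed.

Definition LA delta rB eta v := picU (fun t a b => dg1 delta eta (FU delta rB eta v t) * a + b)
                                     (fun t a b => dg2 eta (FU delta rB eta v t) * a) 0 (-1).
Definition LB delta rB eta v := picW (fun t a b => dg1 delta eta (FU delta rB eta v t) * a + b)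
                                     (fun t a b => dg2 eta (FU delta rB eta v t) * a) 0 (-1).

Lemma lin_sol delta rB eta M v : dhyp delta M -> 0 < rB -> 0 < eta ->
  (forall t, is_derive (LA delta rB eta v) t (dg1 delta eta (FU delta rB eta v t) * LA delta rB eta v t + LB delta rB eta v t)) /\
  (forall t, is_derive (LB delta rB eta v) t (dg2 eta (FU delta rB eta v t) * LA delta rB eta v t)) /\
  LA delta rB eta v 0 = 0 /\ LB delta rB eta v 0 = -1.
Proof.
  intros Hh HrB He. pose proof (dhyp_M0 delta M Hh) as HM0. pose proof Hh as [H0 [HM [Hd Hdc]]].
  pose proof (N_pos eta He) as HN.
  destruct (picard (fun t a b => dg1 delta eta (FU delta rB eta v t) * a + b)
                   (fun t a b => dg2 eta (FU delta rB eta v t) * a) 0 (-1) (1 + M + 2 / eta ^ 3) 1) as [A [B [C D]]].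
  lra. lra.
  - intros t u w u' w'.
    pose proof (dg1_bnd delta eta M (FU delta rB eta v t) H0 HM He).
    pose proof (dg2_bnd eta (FU delta rB eta v t) He).
    set (k1 := dg1 delta eta (FU delta rB eta v t)) in *. set (k2 := dg2 eta (FU delta rB eta v t)) in *.
    replace (k1 * u + w - (k1 * u' + w')) with (k1 * (u - u') + (w - w')) by ring.
    replace (k2 * u - k2 * u') with (k2 * (u - u')) by ring.
    pose proof (Rabs_triang (k1 * (u - u')) (w - w')). rewrite !Rabs_mult in *.
    rewrite (Rabs_right k1), (Rabs_right k2) in * by lra.
    pose proof (Rabs_pos (u - u')). pose proof (Rabs_pos (w - w')). nra.
  - intros a b Ha Hb t. split.
    + apply (continuous_plus (fun s => dg1 delta eta (FU delta rB eta v s) * a s) b); auto.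
      apply (continuous_mult (fun s => dg1 delta eta (FU delta rB eta v s)) a); auto.
      apply (continuous_comp (FU delta rB eta v) (dg1 delta eta)). eapply flow_cont; eauto.
      apply dg1_cont; auto.
    + apply (continuous_mult (fun s => dg2 eta (FU delta rB eta v s)) a); auto.
      apply (continuous_comp (FU delta rB eta v) (dg2 eta)). eapply flow_cont; eauto.
      apply dg2_cont; auto.
  - intros t. rewrite !Rmult_0_r, Rplus_0_l, Rabs_R0, Rabs_left by lra. lra.
  - unfold LA, LB. split; [exact A|split; [exact B|split; auto]].
Qed.

Lemma lin_neg delta rB eta M v S : dhyp delta M -> 0 < rB -> 0 < eta -> 0 < S ->
  LA delta rB eta v S < 0.
Proof.
  intros Hh HrB He HS. pose proof Hh as [H0 [HM [Hd Hdc]]].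
  destruct (lin_sol delta rB eta M v Hh HrB He) as [A [B [C D]]].
  set (k := fun t => dg1 delta eta (FU delta rB eta v t)).
  assert (Hkc : forall t, continuous k t).
  { intros t. apply (continuous_comp (FU delta rB eta v) (dg1 delta eta)). eapply flow_cont; eauto. apply dg1_cont; auto. }
  set (Kf := fun t => 0 + RInt k 0 t).
  set (Q := fun t => LA delta rB eta v t * exp (- Kf t)).
  assert (HQ : forall t, is_derive Q t (LB delta rB eta v t * exp (- Kf t))).
  { intros t. unfold Q. eapply d_val; [|apply d_mult; [apply A|apply (d_comp exp (fun t => - Kf t)); [apply is_derive_exp| apply d_opp, prim_deriv; auto]]].
    fold (k t). simpl. ring. }
  assert (HQ0 : Q 0 = 0) by (unfold Q; rewrite C; ring).
  assert (HLB : forall s, 0 <= s <= S -> LB delta rB eta v s + 1/2 < 0).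
  { apply barrier. lra. intros x _. apply (continuous_plus (LB delta rB eta v) (fun _ => 1/2)).
    eapply der_cont; apply B. apply continuous_const. rewrite D; lra.
    intros s Hs Hbel.
    assert (HQle : forall x, 0 <= x <= s -> LA delta rB eta v x <= 0).
    { intros x Hx. assert (Q x <= 0).
      { rewrite <- HQ0. assert (- Q 0 <= - Q x); [|lra].
        apply (deriv_le (fun t => - Q t) (fun t => - (LB delta rB eta v t * exp (- Kf t))) 0 x). lra.
        intros; apply d_opp; auto.
        intros y Hy. pose proof (Hbel y ltac:(lra)). pose proof (exp_pos (- Kf y)). nra. }
      unfold Q in H. pose proof (exp_pos (- Kf x)). nra. }
    assert (LB delta rB eta v s <= LB delta rB eta v 0).
    { assert (- LB delta rB eta v 0 <= - LB delta rB eta v s); [|lra].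
      apply (deriv_le (fun t => - LB delta rB eta v t) (fun t => - (dg2 eta (FU delta rB eta v t) * LA delta rB eta v t)) 0 s). lra.
      intros; apply d_opp; auto.
      intros y Hy. pose proof (HQle y ltac:(lra)). pose proof (dg2_bnd eta (FU delta rB eta v y) He). nra. }
    rewrite D in H. lra. }
  assert (Q S < Q 0).
  { assert (- Q 0 < - Q S); [|lra].
    apply (deriv_lt (fun t => - Q t) (fun t => - (LB delta rB eta v t * exp (- Kf t))) 0 S). lra.
    intros; apply d_opp; auto.
    intros y Hy. pose proof (HLB y ltac:(lra)). pose proof (exp_pos (- Kf y)). nra. }
  rewrite HQ0 in H. unfold Q in H. pose proof (exp_pos (- Kf S)). nra.
Qed.

Lemma flow_diff delta rB eta M v S : dhyp delta M -> 0 < rB -> 0 < eta -> 0 <= S ->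
  is_derive (fun v => FU delta rB eta v S) v (LA delta rB eta v S).
Proof.
  intros Hh HrB He HS. pose proof Hh as [H0 [HM [Hd Hdc]]].
  pose proof (dhyp_M0 delta M Hh) as HM0. pose proof (N_pos eta He) as HN.
  set (U := FU delta rB eta) in *. set (W := FW delta rB eta) in *.
  set (c := exp (lam M eta * S)).
  assert (Hc1 : 1 <= c).
  { unfold c, lam. pose proof (exp_ineq1_le ((1 + 2 * M + 2 / eta ^ 3) * S)). nra. }
  assert (Hdep : forall h s, 0 <= s <= S -> Rabs (U (v + h) s - U v s) <= Rabs h * c).
  { intros h s Hs. eapply Rle_trans. apply (flow_lipdep delta rB eta M (v + h) v s Hh HrB He); lra.
    replace (v + h - v) with h by ring. apply Rmult_le_compat_l. apply Rabs_pos.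
    unfold c. destruct (Req_dec s S) as [->|]. lra. left; apply exp_increasing. unfold lam. nra. }
  destruct (continuity_ab_maj (fun s => Rabs (U v s)) 0 S HS) as [m [Hm _]].
  { intros s _. apply continuity_pt_filterlim. apply (continuous_Rabs_comp (U v)). eapply flow_cont; eauto. }
  set (R0 := Rabs (U v m) + c).
  assert (HR : forall h s, Rabs h <= 1 -> 0 <= s <= S -> Rabs (U (v + h) s) <= R0 /\ Rabs (U v s) <= R0).
  { intros h s Hh1 Hs. pose proof (Hm s Hs). pose proof (Hdep h s Hs).
    pose proof (Rabs_triang_inv (U (v + h) s) (U v s)). pose proof (Rabs_pos h). unfold R0. split; nra. }
  destruct (dg1_lip delta eta M R0 Hd Hdc H0 HM He) as [K1 [HK1 HL1]].
  set (K2 := 8 / eta ^ 4).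
  assert (HK2 : 0 <= K2) by (unfold K2; apply Rdiv_le_0_compat; [lra|apply pow_lt; lra]).
  set (lam2 := 2 + 2 * M + 2 / eta ^ 3).
  set (Q0 := (K1 ^ 2 + K2 ^ 2) * c ^ 4 * S * exp (lam2 * S)).
  assert (HQ0 : 0 <= Q0).
  { unfold Q0. pose proof (exp_pos (lam2 * S)). apply Rmult_le_pos; [|lra].
    apply Rmult_le_pos; [|lra]. apply Rmult_le_pos. pose proof (pow2_ge_0 K1); pose proof (pow2_ge_0 K2); lra.
    apply pow_le; lra. }
  assert (Hmain : forall h, Rabs h <= 1 ->
     (U (v + h) S - U v S - h * LA delta rB eta v S) ^ 2 <= Q0 * h ^ 4).
  { intros h Hh1.
    destruct (flow_sol delta rB eta M v Hh HrB He) as [A1 [B1 [C1 D1]]].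
    destruct (flow_sol delta rB eta M (v + h) Hh HrB He) as [A2 [B2 [C2 D2]]].
    destruct (lin_sol delta rB eta M v Hh HrB He) as [A3 [B3 [C3 D3]]].
    fold U W in A1, B1, C1, D1, A2, B2, C2, D2, A3, B3.
    set (a := LA delta rB eta v) in *. set (b := LB delta rB eta v) in *.
    set (e1 := fun s => U (v + h) s - U v s - h * a s).
    set (e2 := fun s => W (v + h) s - W v s - h * b s).
    set (R1 := fun s => g1 delta rB eta (U (v + h) s) - g1 delta rB eta (U v s) - dg1 delta eta (U v s) * (U (v + h) s - U v s)).
    set (R2 := fun s => g2 eta (U (v + h) s) - g2 eta (U v s) - dg2 eta (U v s) * (U (v + h) s - U v s)).
    assert (Hsq : forall s, 0 <= s <= S -> (U (v + h) s - U v s) ^ 2 <= h ^ 2 * c ^ 2).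
    { intros s Hs. pose proof (Hdep h s Hs) as Hd'. rewrite <- pow2_abs.
      replace (h ^ 2 * c ^ 2) with ((Rabs h * c) ^ 2) by (rewrite Rpow_mult_distr, pow2_abs; ring).
      apply pow_incr. split. apply Rabs_pos. exact Hd'. }
    assert (HR1 : forall s, 0 <= s <= S -> Rabs (R1 s) <= K1 * c ^ 2 * h ^ 2).
    { intros s Hs. destruct (HR h s Hh1 Hs) as [Ra Rb]. pose proof (Hsq s Hs) as Hq.
      assert (Q : Rabs (R1 s) <= K1 * (U (v + h) s - U v s) ^ 2).
      { unfold R1.
        apply (quad_rem (g1 delta rB eta) (dg1 delta eta) K1 (U v s) (U (v + h) s)).
        - intros s' _. apply g1_der; assumption.
        - intros s' Hs'. apply HL1; [|exact Rb].
          apply Rabs_le. apply Rabs_le_between in Ra. apply Rabs_le_between in Rb. destruct Hs' as [Hs1 Hs2].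
          assert (- R0 <= Rmin (U v s) (U (v + h) s)) by (apply Rmin_case; lra).
          assert (Rmax (U v s) (U (v + h) s) <= R0) by (apply Rmax_case; lra). lra. }
      assert (K1 * (U (v + h) s - U v s) ^ 2 <= K1 * (h ^ 2 * c ^ 2)) by (apply Rmult_le_compat_l; assumption).
      lra. }
    assert (HR2 : forall s, 0 <= s <= S -> Rabs (R2 s) <= K2 * c ^ 2 * h ^ 2).
    { intros s Hs. pose proof (Hsq s Hs) as Hq.
      assert (Q : Rabs (R2 s) <= K2 * (U (v + h) s - U v s) ^ 2).
      { unfold R2.
        apply (quad_rem (g2 eta) (dg2 eta) K2 (U v s) (U (v + h) s)).
        - intros s' _. apply g2_der; assumption.
        - intros s' _. apply dg2_lip; assumption. }
      assert (K2 * (U (v + h) s - U v s) ^ 2 <= K2 * (h ^ 2 * c ^ 2)) by (apply Rmult_le_compat_l; assumption).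
      lra. }
    pose proof (gronwall (fun s => e1 s ^ 2 + e2 s ^ 2)
      (fun s => 2 * e1 s * (e2 s + R1 s + dg1 delta eta (U v s) * e1 s) + 2 * e2 s * (R2 s + dg2 eta (U v s) * e1 s))
      lam2 ((K1 ^ 2 + K2 ^ 2) * c ^ 4 * h ^ 4) S) as G.
    assert (Hfin : e1 S ^ 2 + e2 S ^ 2 <= (e1 0 ^ 2 + e2 0 ^ 2 + (K1 ^ 2 + K2 ^ 2) * c ^ 4 * h ^ 4 * S) * exp (lam2 * S)).
    { apply G.
      - unfold lam2; lra.
      - apply Rmult_le_pos. apply Rmult_le_pos. pose proof (pow2_ge_0 K1); pose proof (pow2_ge_0 K2); lra.
        apply pow_le; lra. replace 4%nat with (2 * 2)%nat by reflexivity. rewrite pow_mult. apply pow2_ge_0.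
      - intros s Hs. eapply d_val; [| apply d_plus; apply (d_comp (fun y => y ^ 2));
          [| apply d_minus; [apply d_minus; [apply A2|apply A1]| apply is_derive_scal, A3]
           | | apply d_minus; [apply d_minus; [apply B2|apply B1]| apply is_derive_scal, B3]]].
        2,3: auto_derive; auto; reflexivity.
        unfold e1, e2, R1, R2. simpl. ring.
      - intros s Hs. specialize (HR1 s Hs). specialize (HR2 s Hs).
        pose proof (dg1_bnd delta eta M (U v s) H0 HM He). pose proof (dg2_bnd eta (U v s) He).
        set (x1 := e1 s) in *. set (x2 := e2 s) in *. set (r1 := R1 s) in *. set (r2 := R2 s) in *.
        set (k1 := dg1 delta eta (U v s)) in *. set (k2 := dg2 eta (U v s)) in *.
        set (q := c ^ 2 * h ^ 2).
        assert (Hr1 : r1 ^ 2 <= K1 ^ 2 * c ^ 4 * h ^ 4).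
        { rewrite <- pow2_abs. replace (K1 ^ 2 * c ^ 4 * h ^ 4) with ((K1 * c ^ 2 * h ^ 2) ^ 2) by ring.
          apply pow_incr. split. apply Rabs_pos. auto. }
        assert (Hr2 : r2 ^ 2 <= K2 ^ 2 * c ^ 4 * h ^ 4).
        { rewrite <- pow2_abs. replace (K2 ^ 2 * c ^ 4 * h ^ 4) with ((K2 * c ^ 2 * h ^ 2) ^ 2) by ring.
          apply pow_incr. split. apply Rabs_pos. auto. }
        assert (T1 : 2 * x1 * x2 <= x1 ^ 2 + x2 ^ 2) by (pose proof (pow2_ge_0 (x1 - x2)); nra).
        assert (T2 : 2 * x1 * r1 <= x1 ^ 2 + r1 ^ 2) by (pose proof (pow2_ge_0 (x1 - r1)); nra).
        assert (T3 : 2 * x2 * r2 <= x2 ^ 2 + r2 ^ 2) by (pose proof (pow2_ge_0 (x2 - r2)); nra).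
        assert (T4 : 2 * k1 * x1 * x1 <= 2 * M * x1 ^ 2) by (pose proof (pow2_ge_0 x1); simpl; nra).
        assert (T5 : 2 * k2 * x1 * x2 <= 2 / eta ^ 3 * (x1 ^ 2 + x2 ^ 2)).
        { assert (2 * x1 * x2 <= x1 ^ 2 + x2 ^ 2) by auto. assert (- (2 * x1 * x2) <= x1 ^ 2 + x2 ^ 2) by (pose proof (pow2_ge_0 (x1 + x2)); nra).
          assert (k2 * (2 * x1 * x2) <= k2 * (x1 ^ 2 + x2 ^ 2)) by (apply Rmult_le_compat_l; lra).
          assert (k2 * (x1 ^ 2 + x2 ^ 2) <= 2 / eta ^ 3 * (x1 ^ 2 + x2 ^ 2)) by (apply Rmult_le_compat_r; [pose proof (pow2_ge_0 x1); pose proof (pow2_ge_0 x2); lra| lra]).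
          lra. }
        assert (T6 : 0 <= M * x2 ^ 2) by (apply Rmult_le_pos; [lra|apply pow2_ge_0]).
        replace (2 * x1 * (x2 + r1 + k1 * x1) + 2 * x2 * (r2 + k2 * x1)) with
          (2 * x1 * x2 + 2 * x1 * r1 + 2 * k1 * x1 * x1 + 2 * x2 * r2 + 2 * k2 * x1 * x2) by ring.
        unfold lam2. set (N := 2 / eta ^ 3) in *. lra.
      - lra. }
    assert (E1 : e1 0 = 0) by (unfold e1; rewrite C1, C2, C3; ring).
    assert (E2 : e2 0 = 0) by (unfold e2; rewrite D1, D2, D3; ring).
    rewrite E1, E2 in Hfin. fold (e1 S). pose proof (pow2_ge_0 (e2 S)).
    unfold Q0. replace ((0 ^ 2 + 0 ^ 2 + (K1 ^ 2 + K2 ^ 2) * c ^ 4 * h ^ 4 * S) * exp (lam2 * S))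
      with ((K1 ^ 2 + K2 ^ 2) * c ^ 4 * S * exp (lam2 * S) * h ^ 4) in Hfin by ring. lra. }
  apply is_derive_Reals. intros eps Heps.
  assert (Hd0 : 0 < Rmin 1 (eps / (Q0 + 1))) by (apply Rmin_case; [lra| apply Rdiv_lt_0_compat; lra]).
  exists (mkposreal _ Hd0). intros h Hh0 Hhd. simpl in Hhd.
  assert (Hh1 : Rabs h <= 1) by (left; eapply Rlt_le_trans; [apply Hhd|apply Rmin_l]).
  assert (Hh2 : Rabs h < eps / (Q0 + 1)) by (eapply Rlt_le_trans; [apply Hhd|apply Rmin_r]).
  specialize (Hmain h Hh1).
  set (e := U (v + h) S - U v S - h * LA delta rB eta v S) in *.
  assert (He1 : Rabs e <= (Q0 + 1) * h ^ 2).
  { apply sqr_le_abs. pose proof (pow2_ge_0 h); nra.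
    replace (((Q0 + 1) * h ^ 2) ^ 2) with ((Q0 + 1) ^ 2 * h ^ 4) by ring.
    assert (Q0 <= (Q0 + 1) ^ 2) by nra.
    assert (0 <= h ^ 4) by (replace 4%nat with (2 * 2)%nat by reflexivity; rewrite pow_mult; apply pow2_ge_0).
    nra. }
  replace ((U (v + h) S - U v S) / h - LA delta rB eta v S) with (e / h) by (unfold e; field; auto).
  unfold Rdiv. rewrite Rabs_mult, Rabs_inv.
  assert (0 < Rabs h) by (apply Rabs_pos_lt; auto).
  apply Rle_lt_trans with ((Q0 + 1) * Rabs h).
  { apply Rmult_le_reg_r with (Rabs h); auto. rewrite Rmult_assoc, Rinv_l by lra.
    replace ((Q0 + 1) * Rabs h * Rabs h) with ((Q0 + 1) * h ^ 2) by (rewrite <- pow2_abs; ring). lra. }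
  apply Rmult_lt_reg_r with (/ (Q0 + 1)). apply Rinv_0_lt_compat; lra.
  replace ((Q0 + 1) * Rabs h * / (Q0 + 1)) with (Rabs h) by fld. exact Hh2.
Qed.

Definition P delta rB T eta v := 0 < eta /\ forall s, 0 <= s <= T -> 2 * eta < FU delta rB eta v s.

Lemma g1_big delta rB eta x : 0 < eta -> 2 * eta <= x -> g1 delta rB eta x = Dp delta rB x.
Proof. intros He Hx. unfold g1. rewrite phi_id; auto. Qed.
Lemma g2_big eta x : 0 < eta -> 2 * eta <= x -> g2 eta x = - / x ^ 2.
Proof. intros He Hx. unfold g2. rewrite phi_id; auto. Qed.
Lemma dg1_big delta eta x : 0 < eta -> 2 * eta <= x -> dg1 delta eta x = delta x.
Proof. intros He Hx. unfold dg1. rewrite phi_id, psi_high; auto. ring. Qed.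

Lemma adm_dhyp delta : admissible_delta delta -> exists M, dhyp delta M.
Proof. intros [H0 [[M HM] [Hd Hdc]]]. exists M. repeat split; auto. Qed.

Lemma sys_uniq delta rB eta M u1 w1 u2 w2 S : dhyp delta M -> 0 < rB -> 0 < eta ->
  (forall s, 0 <= s <= S -> is_derive u1 s (w1 s + g1 delta rB eta (u1 s)) /\ is_derive w1 s (g2 eta (u1 s))) ->
  (forall s, 0 <= s <= S -> is_derive u2 s (w2 s + g1 delta rB eta (u2 s)) /\ is_derive w2 s (g2 eta (u2 s))) ->
  u1 0 = u2 0 -> w1 0 = w2 0 ->
  forall s, 0 <= s <= S -> u1 s = u2 s.
Proof.
  intros Hh HrB He H1 H2 E1 E2 s Hs.
  pose proof (sys_gron delta rB eta M u1 w1 u2 w2 S Hh HrB He H1 H2 s Hs) as G.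
  rewrite E1, E2, !Rminus_diag in G. simpl in G. rewrite !Rmult_0_l, Rplus_0_l, Rmult_0_l in G.
  pose proof (pow2_ge_0 (u1 s - u2 s)). pose proof (pow2_ge_0 (w1 s - w2 s)).
  assert (Z : (u1 s - u2 s) * (u1 s - u2 s) = 0) by (simpl in *; lra).
  apply Rminus_diag_uniq, Rsqr_0_uniq. exact Z.
Qed.

Lemma flow_sys delta rB eta M v : dhyp delta M -> 0 < rB -> 0 < eta -> forall S s, 0 <= s <= S ->
  is_derive (FU delta rB eta v) s (FW delta rB eta v s + g1 delta rB eta (FU delta rB eta v s)) /\
  is_derive (FW delta rB eta v) s (g2 eta (FU delta rB eta v s)).
Proof. intros Hh HrB He S s _. destruct (flow_sol delta rB eta M v Hh HrB He) as [A [B _]]. auto. Qed.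

Lemma transfer delta rB T eta eta' M v : dhyp delta M -> 0 < rB -> P delta rB T eta v -> 0 < eta' ->
  (forall s, 0 <= s <= T -> 2 * eta' < FU delta rB eta v s) ->
  forall s, 0 <= s <= T -> FU delta rB eta' v s = FU delta rB eta v s.
Proof.
  intros Hh HrB [He HP] He' Hb.
  destruct (flow_sol delta rB eta M v Hh HrB He) as [A1 [B1 [C1 D1]]].
  destruct (flow_sol delta rB eta' M v Hh HrB He') as [A2 [B2 [C2 D2]]].
  apply (sys_uniq delta rB eta' M _ (FW delta rB eta' v) _ (FW delta rB eta v) T Hh HrB He').
  - intros s _. auto.
  - intros s Hs. specialize (HP s Hs). specialize (Hb s Hs).
    set (x := FU delta rB eta v s) in *.
    rewrite (g1_big delta rB eta' x He' ltac:(lra)), (g2_big eta' x He' ltac:(lra)).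
    rewrite <- (g1_big delta rB eta x He ltac:(lra)), <- (g2_big eta x He ltac:(lra)). auto.
  - congruence.
  - congruence.
Qed.

Lemma P_sol delta rB T eta M v : dhyp delta M -> 0 < rB -> 0 < T -> P delta rB T eta v ->
  past_solution delta T rB v (fun t => FU delta rB eta v (- t)).
Proof.
  intros Hh HrB HT [He HP]. pose proof Hh as [H0 [HM [Hd Hdc]]].
  destruct (flow_sol delta rB eta M v Hh HrB He) as [A [B [C D]]].
  set (U := FU delta rB eta v) in *. set (W := FW delta rB eta v) in *.
  assert (Hr : forall t, is_derive (fun t => U (- t)) t (- (W (- t) + g1 delta rB eta (U (- t))))).
  { intros t. eapply d_val; [|apply (d_comp U (fun t => - t))]. 2: apply A. 2: apply d_opp, d_id. simpl; ring. }
  assert (HD : forall t, Derive (fun t => U (- t)) t = - (W (- t) + g1 delta rB eta (U (- t)))).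
  { intros t. apply is_derive_unique, Hr. }
  assert (HrB2 : 2 * eta < rB) by (rewrite <- C; apply HP; lra).
  split; [|split].
  - rewrite Ropp_0. auto.
  - rewrite HD, Ropp_0, C, D, g1_big, Dp_rB by lra. ring.
  - intros t Ht. assert (Hs : 0 <= - t <= T) by lra. specialize (HP _ Hs).
    split; [|split].
    + lra.
    + eexists; apply Hr.
    + apply (is_derive_ext (fun t => - (W (- t) + g1 delta rB eta (U (- t))))).
      intros; symmetry; apply HD.
      eapply d_val; [|apply d_opp, d_plus; [apply (d_comp W (fun t => - t)); [apply B| apply d_opp, d_id]
                       | apply (d_comp (fun x => g1 delta rB eta (U x)) (fun t => - t)); [apply (d_comp (g1 delta rB eta) U); [apply g1_der; auto| apply A] | apply d_opp, d_id]]].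
      rewrite HD. rewrite g2_big, dg1_big by lra. rewrite g1_big by lra. simpl; field. intro Z; nra.
Qed.

Lemma sol_P delta rB T M v r : dhyp delta M -> 0 < rB -> 0 < T -> past_solution delta T rB v r ->
  exists eta, P delta rB T eta v /\ FU delta rB eta v T = r (- T).
Proof.
  intros Hh HrB HT [R0 [R1 Hr]]. pose proof Hh as [H0 [HM [Hd Hdc]]].
  destruct (continuity_ab_min r (- T) 0) as [xm [Hxm Hxm']]. lra.
  { intros c Hc. apply continuity_pt_filterlim. destruct (Hr c Hc) as [_ [[l Hl] _]]. eapply der_cont; eauto. }
  set (m0 := r xm). assert (Hm0 : 0 < m0) by (apply Hr; auto).
  set (eta := m0 / 3). assert (He : 0 < eta) by (unfold eta; lra).
  set (u := fun s => r (- s)). set (w := fun s => - Derive r (- s) - Dp delta rB (r (- s))).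
  assert (Hsol : forall s, 0 <= s <= T -> is_derive u s (w s + g1 delta rB eta (u s)) /\ is_derive w s (g2 eta (u s))).
  { intros s Hs. assert (Hs' : - T <= - s <= 0) by lra.
    destruct (Hr _ Hs') as [Hpos [[l Hl] Hdd]].
    assert (Hl' : is_derive r (- s) (Derive r (- s))) by (apply Derive_correct; eexists; eauto).
    assert (Hbig : 2 * eta <= u s) by (unfold u; pose proof (Hxm (- s) Hs'); unfold eta, m0 in *; lra).
    split.
    - rewrite g1_big by auto. unfold w, u.
      eapply d_val; [|apply (d_comp r (fun t => - t)); [apply Hl'| apply d_opp, d_id]]. simpl; ring.
    - rewrite g2_big by auto. unfold w, u.
      eapply d_val; [|apply d_minus; [apply d_opp, (d_comp (Derive r) (fun t => - t)); [apply Hdd| apply d_opp, d_id]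
                      | apply (d_comp (Dp delta rB) (fun t => r (- t))); [apply Dp_der; auto| apply (d_comp r (fun t => - t)); [apply Hl'| apply d_opp, d_id]]]].
      simpl; field. intro Z; nra. }
  destruct (flow_sol delta rB eta M v Hh HrB He) as [A [B [C D]]].
  assert (Heq : forall s, 0 <= s <= T -> FU delta rB eta v s = u s).
  { apply (sys_uniq delta rB eta M _ (FW delta rB eta v) _ w T Hh HrB He).
    intros s _. auto. exact Hsol.
    rewrite C. unfold u. rewrite Ropp_0. auto.
    rewrite D. unfold w. rewrite Ropp_0, R0, R1, Dp_rB. ring. }
  exists eta. split. split; auto.
  - intros s Hs. rewrite Heq by auto. unfold u. assert (Hs' : - T <= - s <= 0) by lra.
    pose proof (Hxm (- s) Hs'). unfold eta, m0 in *. lra.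
  - rewrite Heq by lra. reflexivity.
Qed.

Lemma flow_mono delta rB eta M w v s : dhyp delta M -> 0 < rB -> 0 < eta -> w <= v -> 0 <= s ->
  FU delta rB eta v s <= FU delta rB eta w s.
Proof.
  intros Hh HrB He Hwv Hs.
  assert (- FU delta rB eta w s <= - FU delta rB eta v s); [|lra].
  apply (deriv_le (fun x => - FU delta rB eta x s) (fun x => - LA delta rB eta x s) w v); auto.
  intros x _. apply d_opp. apply (flow_diff delta rB eta M x s); auto.
  intros x _. destruct (Req_dec s 0) as [->|Hne].
  - destruct (lin_sol delta rB eta M x Hh HrB He) as [_ [_ [C _]]]. rewrite C. lra.
  - pose proof (lin_neg delta rB eta M x s Hh HrB He ltac:(lra)). lra.
Qed.

Lemma P_down delta rB T eta M w v : dhyp delta M -> 0 < rB -> P delta rB T eta v -> w <= v -> P delta rB T eta w.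
Proof.
  intros Hh HrB [He HP] Hwv. split; auto. intros s Hs.
  pose proof (flow_mono delta rB eta M w v s Hh HrB He Hwv ltac:(lra)). specialize (HP s Hs). lra.
Qed.

Lemma exp_mono_le a b : a <= b -> exp a <= exp b.
Proof. intros H. destruct (Req_dec a b) as [->|]. lra. left; apply exp_increasing; lra. Qed.

Lemma lam_pos M eta : 0 <= M -> 0 < eta -> 0 <= lam M eta.
Proof. intros HM He. unfold lam. pose proof (N_pos eta He). lra. Qed.

Lemma P_open delta rB T eta M v : dhyp delta M -> 0 < rB -> 0 < T -> P delta rB T eta v ->
  exists eps, 0 < eps /\ P delta rB T eta (v + eps).
Proof.
  intros Hh HrB HT [He HP].
  destruct (continuity_ab_min (FU delta rB eta v) 0 T) as [m [Hm Hm']]. lra.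
  { intros c _. apply continuity_pt_filterlim. eapply flow_cont; eauto. }
  set (mu := FU delta rB eta v m). assert (Hmu : 2 * eta < mu) by (apply HP; auto).
  set (c := exp (lam M eta * T)). assert (Hc : 0 < c) by apply exp_pos.
  exists ((mu - 2 * eta) / (2 * c)). split. apply Rdiv_lt_0_compat; lra.
  split; auto. intros s Hs.
  pose proof (flow_lipdep delta rB eta M (v + (mu - 2 * eta) / (2 * c)) v s Hh HrB He ltac:(lra)) as L.
  replace (v + (mu - 2 * eta) / (2 * c) - v) with ((mu - 2 * eta) / (2 * c)) in L by ring.
  rewrite (Rabs_right ((mu - 2 * eta) / (2 * c))) in L by (left; apply Rdiv_lt_0_compat; lra).
  assert (exp (lam M eta * s) <= c).
  { unfold c. apply exp_mono_le. pose proof (lam_pos M eta (dhyp_M0 _ _ Hh) He). nra. }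
  assert ((mu - 2 * eta) / (2 * c) * exp (lam M eta * s) <= (mu - 2 * eta) / 2).
  { apply Rle_trans with ((mu - 2 * eta) / (2 * c) * c). apply Rmult_le_compat_l; auto.
    left; apply Rdiv_lt_0_compat; lra. right; fld. }
  apply Rabs_le_between in L. pose proof (Hm s Hs). fold mu in H1. lra.
Qed.

Lemma q_der delta rB eta M v : dhyp delta M -> 0 < rB -> 0 < eta -> forall s,
  is_derive (fun s => FW delta rB eta v s + g1 delta rB eta (FU delta rB eta v s)) s
    (g2 eta (FU delta rB eta v s) + dg1 delta eta (FU delta rB eta v s) * (FW delta rB eta v s + g1 delta rB eta (FU delta rB eta v s))).
Proof.
  intros Hh HrB He s. pose proof Hh as [H0 [HM [Hd Hdc]]].
  destruct (flow_sol delta rB eta M v Hh HrB He) as [A [B _]].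
  eapply d_val; [|apply d_plus; [apply B| apply (d_comp (g1 delta rB eta) (FU delta rB eta v)); [apply g1_der; auto|apply A]]].
  simpl; ring.
Qed.

Lemma P_bound delta rB T eta M v : dhyp delta M -> 0 < rB -> 0 < T -> P delta rB T eta v -> v < 2 * rB / T.
Proof.
  intros Hh HrB HT [He HP]. pose proof Hh as [H0 [HM [Hd Hdc]]].
  destruct (Rlt_dec v (2 * rB / T)) as [|Hv]; auto. exfalso.
  assert (Hv0 : 0 < v) by (assert (0 < 2 * rB / T) by (apply Rdiv_lt_0_compat; lra); lra).
  destruct (flow_sol delta rB eta M v Hh HrB He) as [A [B [C D]]].
  set (U := FU delta rB eta v) in *. set (W := FW delta rB eta v) in *.
  set (q := fun s => W s + g1 delta rB eta (U s)).
  assert (Hq : forall s, is_derive q s (g2 eta (U s) + dg1 delta eta (U s) * q s)) by (apply (q_der delta rB eta M v); auto).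
  assert (HrB2 : 2 * eta < rB) by (rewrite <- C; apply HP; lra).
  assert (Hq0 : q 0 = - v) by (unfold q; rewrite C, D, g1_big, Dp_rB by lra; ring).
  assert (Hneg : forall s, 0 <= s <= T -> q s + v / 2 < 0).
  { apply barrier. lra. intros x _. apply (continuous_plus q (fun _ => v / 2)). eapply der_cont; apply Hq. apply continuous_const.
    rewrite Hq0; lra.
    intros s Hs Hbel.
    assert (q s <= q 0).
    { assert (- q 0 <= - q s); [|lra].
      apply (deriv_le (fun x => - q x) (fun x => - (g2 eta (U x) + dg1 delta eta (U x) * q x)) 0 s). lra.
      intros; apply d_opp; auto.
      intros y Hy. pose proof (Hbel y ltac:(lra)). pose proof (g2_bnd eta (U y) He). pose proof (dg1_bnd delta eta M (U y) H0 HM He). nra. }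
    lra. }
  assert (- U 0 - v / 2 * 0 <= - U T - v / 2 * T).
  { apply (deriv_le (fun x => - U x - v / 2 * x) (fun x => - q x - v / 2 * 1) 0 T). lra.
    intros x _. apply d_minus. apply d_opp, A. apply is_derive_scal, d_id.
    intros x Hx. pose proof (Hneg x ltac:(lra)). lra. }
  rewrite C in H. pose proof (HP T ltac:(lra)). fold U in H1.
  assert (v / 2 * T >= rB).
  { apply Rnot_lt_ge in Hv. apply Rge_le in Hv. apply Rle_ge.
    apply Rmult_le_compat_r with (r := T / 2) in Hv; [|lra].
    replace (2 * rB / T * (T / 2)) with rB in Hv by fld. lra. }
  lra.
Qed.

Lemma Dp_mono delta rB M x y : dhyp delta M -> 0 < rB -> 0 < x -> x <= y -> Dp delta rB x <= Dp delta rB y.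
Proof.
  intros Hh HrB Hx Hxy. pose proof Hh as [H0 [HM [Hd Hdc]]].
  apply (deriv_le (Dp delta rB) delta x y); auto.
  intros; apply Dp_der; auto; lra. intros; apply H0; lra.
Qed.

Lemma flow_lower delta rB T M v : dhyp delta M -> 0 < rB -> 0 < T ->
  0 <= - v - (T / (rB / 4) ^ 2 + M * rB) ->
  P delta rB T (rB / 4) v /\ rB + (- v - (T / (rB / 4) ^ 2 + M * rB)) * T <= FU delta rB (rB / 4) v T.
Proof.
  intros Hh HrB HT Hc. pose proof Hh as [H0 [HM [Hd Hdc]]]. pose proof (dhyp_M0 _ _ Hh) as HM0.
  set (eta := rB / 4) in *. assert (He : 0 < eta) by (unfold eta; lra).
  set (c := - v - (T / eta ^ 2 + M * rB)) in *.
  destruct (flow_sol delta rB eta M v Hh HrB He) as [A [B [C D]]].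
  set (U := FU delta rB eta v) in *. set (W := FW delta rB eta v) in *.
  assert (Hp2 : 0 < eta ^ 2) by (apply pow_lt; lra).
  assert (HW : forall s, 0 <= s -> - v - s / eta ^ 2 <= W s).
  { intros s Hs. assert (W 0 + 0 / eta ^ 2 <= W s + s / eta ^ 2); [|rewrite D in H; unfold Rdiv in *; lra].
    apply (deriv_le (fun x => W x + x / eta ^ 2) (fun x => g2 eta (U x) + 1 / eta ^ 2) 0 s); auto.
    intros x _. apply d_plus. apply B. apply (d_ext (fun x => / eta ^ 2 * x) _ x (/ eta ^ 2 * 1)).
    intros; unfold Rdiv; simpl; ring. unfold Rdiv; simpl; ring. apply is_derive_scal, d_id.
    intros x _. pose proof (g2_bnd eta (U x) He). unfold Rdiv. lra. }
  assert (HDeta : - (M * rB) <= Dp delta rB eta).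
  { destruct (mvt (Dp delta rB) delta eta rB) as [x [Hx E]]. unfold eta; lra.
    intros; apply Dp_der; auto; lra. rewrite Dp_rB in E. pose proof (HM x ltac:(lra)).
    assert (delta x * (rB - eta) <= M * rB) by (pose proof (H0 x ltac:(lra)); unfold eta in *; nra). lra. }
  assert (Hg1 : forall x, - (M * rB) <= g1 delta rB eta x).
  { intros x. unfold g1. pose proof (phi_ge eta x He). pose proof (Dp_mono delta rB M eta (phi eta x) Hh HrB He H). lra. }
  assert (HU : forall s, 0 <= s <= T -> rB + c * s <= U s).
  { intros s Hs. assert (U 0 - c * 0 <= U s - c * s); [|rewrite C in H; lra].
    apply (deriv_le (fun x => U x - c * x) (fun x => (W x + g1 delta rB eta (U x)) - c * 1) 0 s). lra.
    intros x _. apply d_minus. apply A. apply is_derive_scal, d_id.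
    intros x Hx. pose proof (HW x ltac:(lra)). pose proof (Hg1 (U x)).
    assert (x / eta ^ 2 <= T / eta ^ 2) by (unfold Rdiv; apply Rmult_le_compat_r; [left; apply Rinv_0_lt_compat|]; lra).
    unfold c. lra. }
  split. split; auto. intros s Hs. pose proof (HU s Hs). assert (0 <= c * s) by (apply Rmult_le_pos; lra).
  fold U. assert (2 * eta < rB) by (unfold eta; lra). lra.
  apply HU; lra.
Qed.

Lemma flow_min delta rB T eta M v : dhyp delta M -> 0 < rB -> 0 < eta -> 0 < T ->
  forall s, 0 <= s <= T -> Rmin rB (FU delta rB eta v T) <= FU delta rB eta v s.
Proof.
  intros Hh HrB He HT. pose proof Hh as [H0 [HM [Hd Hdc]]].
  destruct (flow_sol delta rB eta M v Hh HrB He) as [A [B [C D]]].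
  set (U := FU delta rB eta v) in *. set (W := FW delta rB eta v) in *.
  set (q := fun s => W s + g1 delta rB eta (U s)).
  assert (Hq : forall s, is_derive q s (g2 eta (U s) + dg1 delta eta (U s) * q s)) by (apply (q_der delta rB eta M v); auto).
  destruct (continuity_ab_min U 0 T) as [m [Hm Hm']]. lra.
  { intros c _. apply continuity_pt_filterlim. eapply der_cont; apply A. }
  intros s Hs. eapply Rle_trans; [|apply Hm; auto].
  destruct (Req_dec m 0) as [->|Hm0]. rewrite C. apply Rmin_l.
  destruct (Req_dec m T) as [->|HmT]. apply Rmin_r.
  exfalso.
  assert (Hint : 0 < m < T) by lra.
  destruct (Rtotal_order (q m) 0) as [Hlt|[Heq|Hgt]].
  - destruct (deriv_neg_right U m (q m) (A m) Hlt) as [d [Hd0 Hy]].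
    set (y := m + Rmin d (T - m) / 2).
    assert (Hmin : 0 < Rmin d (T - m)) by (apply Rmin_case; lra).
    assert (Rmin d (T - m) <= d) by apply Rmin_l. assert (Rmin d (T - m) <= T - m) by apply Rmin_r.
    pose proof (Hy y ltac:(unfold y; lra)). pose proof (Hm y ltac:(unfold y; lra)). lra.
  - pose proof (Hq m) as Hqm. rewrite Heq, Rmult_0_r, Rplus_0_r in Hqm.
    pose proof (g2_bnd eta (U m) He).
    destruct (deriv_neg_right q m _ Hqm ltac:(lra)) as [d [Hd0 Hy]].
    set (y := m + Rmin d (T - m) / 2).
    assert (Hmin : 0 < Rmin d (T - m)) by (apply Rmin_case; lra).
    assert (Rmin d (T - m) <= d) by apply Rmin_l. assert (Rmin d (T - m) <= T - m) by apply Rmin_r.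
    assert (U y < U m).
    { assert (- U m < - U y); [|lra].
      apply (deriv_lt (fun x => - U x) (fun x => - q x) m y). unfold y; lra.
      intros; apply d_opp, A.
      intros x Hx. pose proof (Hy x ltac:(unfold y in *; lra)). lra. }
    pose proof (Hm y ltac:(unfold y; lra)). lra.
  - destruct (deriv_pos_left U m (q m) (A m) Hgt) as [d [Hd0 Hy]].
    set (y := m - Rmin d m / 2).
    assert (Hmin : 0 < Rmin d m) by (apply Rmin_case; lra).
    assert (Rmin d m <= d) by apply Rmin_l. assert (Rmin d m <= m) by apply Rmin_r.
    pose proof (Hy y ltac:(unfold y; lra)). pose proof (Hm y ltac:(unfold y; lra)). lra.
Qed.

Definition RRf delta rB T v :=
  match excluded_middle_informative (exists eta, P delta rB T eta v) with
  | left H => FU delta rB (proj1_sig (constructive_indefinite_description _ H)) v T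
  | right _ => 0
  end.

Lemma RR_eq delta rB T M eta v : dhyp delta M -> 0 < rB -> 0 < T -> P delta rB T eta v ->
  RRf delta rB T v = FU delta rB eta v T.
Proof.
  intros Hh HrB HT HP. unfold RRf.
  destruct (excluded_middle_informative (exists eta, P delta rB T eta v)) as [H|H]; [|exfalso; apply H; eauto].
  destruct (constructive_indefinite_description _ H) as [eta' HP']. simpl.
  destruct HP as [He HPs]. destruct HP' as [He' HPs'].
  destruct (Rle_dec eta eta').
  - symmetry. apply (transfer delta rB T eta' eta M v Hh HrB (conj He' HPs') He). intros s Hs. specialize (HPs' s Hs). lra. lra.
  - apply (transfer delta rB T eta eta' M v Hh HrB (conj He HPs) He'). intros s Hs. specialize (HPs s Hs). lra. lra.
Qed.

Lemma I_iff_P delta rB T M v : dhyp delta M -> 0 < rB -> 0 < T ->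
  (in_I delta T rB v <-> exists eta, P delta rB T eta v).
Proof.
  intros Hh HrB HT. split.
  - intros [r Hr]. destruct (sol_P delta rB T M v r Hh HrB HT Hr) as [eta [HP _]]. eauto.
  - intros [eta HP]. exists (fun t => FU delta rB eta v (- t)). apply (P_sol delta rB T eta M v); auto.
Qed.

Theorem lemma3p2 (delta : R -> R) (T rB : R)
  (Hdelta : admissible_delta delta) (HT : 0 < T) (HrB : 0 < rB) :
  exists beta : R,
    (forall v, in_I delta T rB v <-> v < beta) /\
    exists RR : R -> R,
      (forall v r, v < beta -> past_solution delta T rB v r -> RR v = r (- T)) /\
      (forall v, v < beta -> exists d, is_derive RR v d /\ d < 0) /\
      is_lim RR m_infty p_infty /\
      filterlim RR (at_left beta) (Rbar_locally (Finite 0)).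
Proof.
  destruct (adm_dhyp delta Hdelta) as [M Hh]. pose proof (dhyp_M0 _ _ Hh) as HM0.
  set (C0 := T / (rB / 4) ^ 2 + M * rB).
  assert (Hne : exists v, in_I delta T rB v).
  { exists (- C0). apply (I_iff_P delta rB T M); auto. exists (rB / 4).
    apply (flow_lower delta rB T M (- C0) Hh HrB HT). fold C0. lra. }
  assert (Hbd : bound (in_I delta T rB)).
  { exists (2 * rB / T). intros v Hv. apply (I_iff_P delta rB T M v Hh HrB HT) in Hv. destruct Hv as [eta HP].
    left. apply (P_bound delta rB T eta M v); auto. }
  destruct (completeness _ Hbd Hne) as [beta [Hub Hlub]].
  assert (HI : forall v, in_I delta T rB v <-> v < beta).
  { intros v. split.
    - intros Hv. apply (I_iff_P delta rB T M v Hh HrB HT) in Hv. destruct Hv as [eta HP].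
      destruct (P_open delta rB T eta M v Hh HrB HT HP) as [eps [Heps HP']].
      assert (v + eps <= beta). { apply Hub. apply (I_iff_P delta rB T M _ Hh HrB HT). eauto. }
      lra.
    - intros Hv. destruct (classic (exists w, in_I delta T rB w /\ v <= w)) as [[w [Hw Hvw]]|Hno].
      + apply (I_iff_P delta rB T M w Hh HrB HT) in Hw. destruct Hw as [eta HP].
        apply (I_iff_P delta rB T M v Hh HrB HT). exists eta. apply (P_down delta rB T eta M v w); auto.
      + exfalso. assert (beta <= v); [|lra]. apply Hlub. intros w Hw.
        destruct (Rle_dec w v); auto. exfalso. apply Hno. exists w. split; auto. lra. }
  assert (HIP : forall v, v < beta -> exists eta, P delta rB T eta v).
  { intros v Hv. apply (I_iff_P delta rB T M v Hh HrB HT), HI; auto. }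
  set (RR := RRf delta rB T).
  assert (Hpos : forall v, v < beta -> 0 < RR v).
  { intros v Hv. destruct (HIP v Hv) as [eta HP]. unfold RR. rewrite (RR_eq delta rB T M eta v Hh HrB HT HP).
    destruct HP as [He HPs]. specialize (HPs T ltac:(lra)). lra. }
  assert (Hdec : forall v w, v <= w -> w < beta -> RR w <= RR v).
  { intros v w Hvw Hw. destruct (HIP w Hw) as [eta HP].
    pose proof (P_down delta rB T eta M v w Hh HrB HP Hvw) as HPv.
    unfold RR. rewrite (RR_eq delta rB T M eta v Hh HrB HT HPv), (RR_eq delta rB T M eta w Hh HrB HT HP).
    apply (flow_mono delta rB eta M v w T Hh HrB); auto. apply HP. lra. }
  exists beta. split; auto. exists RR. split; [|split; [|split]].
  -
    intros v r Hv Hr. destruct (sol_P delta rB T M v r Hh HrB HT Hr) as [eta [HP HE]].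
    unfold RR. rewrite (RR_eq delta rB T M eta v Hh HrB HT HP). auto.
  -
    intros v Hv. destruct (HIP v Hv) as [eta HP].
    destruct (P_open delta rB T eta M v Hh HrB HT HP) as [eps [Heps HP']].
    exists (LA delta rB eta v T). split.
    + apply (is_derive_ext_loc (fun w => FU delta rB eta w T)).
      * exists (mkposreal eps Heps). intros w Hw.
        unfold ball in Hw; simpl in Hw; unfold AbsRing_ball, abs, minus, plus, opp in Hw; simpl in Hw.
        apply Rabs_def2 in Hw.
        unfold RR. symmetry. apply (RR_eq delta rB T M eta w Hh HrB HT).
        apply (P_down delta rB T eta M w (v + eps) Hh HrB HP'). lra.
      * apply (flow_diff delta rB eta M v T Hh HrB). apply HP. lra.
    + apply (lin_neg delta rB eta M v T Hh HrB); auto. apply HP.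
  -
    apply is_lim_spec. intros Mb. simpl.
    exists (- (C0 + Rabs Mb / T)). intros v Hv.
    assert (Hc : Rabs Mb / T < - v - C0) by lra.
    assert (0 <= Rabs Mb / T) by (apply Rdiv_le_0_compat; [apply Rabs_pos|lra]).
    destruct (flow_lower delta rB T M v Hh HrB HT) as [HP Hlow]. fold C0. lra.
    fold C0 in Hlow. unfold RR. rewrite (RR_eq delta rB T M (rB / 4) v Hh HrB HT HP).
    assert (Rabs Mb < (- v - C0) * T).
    { apply Rmult_lt_compat_r with (r := T) in Hc; auto. replace (Rabs Mb / T * T) with (Rabs Mb) in Hc by fld. lra. }
    pose proof (Rle_abs Mb). lra.
  -
    change (filterlim RR (at_left beta) (locally 0)).
    apply filterlim_locally. intros eps.
    assert (Hv0 : exists v0, v0 < beta /\ RR v0 < eps).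
    { destruct (classic (exists v0, v0 < beta /\ RR v0 < eps)) as [H|Hno]; auto. exfalso.
      assert (Hall : forall v, v < beta -> eps <= RR v).
      { intros v Hv. destruct (Rle_dec eps (RR v)); auto. exfalso. apply Hno. exists v. split; auto. lra. }
      set (eta0 := Rmin rB eps / 3).
      assert (He0 : 0 < eta0) by (unfold eta0; assert (0 < Rmin rB eps) by (apply Rmin_case; [lra|apply cond_pos]); lra).
      assert (H3 : forall v s, v < beta -> 0 <= s <= T -> 3 * eta0 <= FU delta rB eta0 v s).
      { intros v s Hv Hs. destruct (HIP v Hv) as [eta HP].
        pose proof (flow_min delta rB T eta M v Hh HrB (proj1 HP) HT s Hs) as Hmin.
        assert (E : RR v = FU delta rB eta v T) by (apply (RR_eq delta rB T M eta v Hh HrB HT HP)).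
        pose proof (Hall v Hv) as Hge. rewrite E in Hge.
        assert (3 * eta0 <= Rmin rB (FU delta rB eta v T)).
        { unfold eta0. replace (3 * (Rmin rB eps / 3)) with (Rmin rB eps) by field.
          apply Rmin_glb. apply Rmin_l. eapply Rle_trans; [apply Rmin_r|]. exact Hge. }
        assert (Hb : forall s', 0 <= s' <= T -> 2 * eta0 < FU delta rB eta v s').
        { intros s' Hs'. pose proof (flow_min delta rB T eta M v Hh HrB (proj1 HP) HT s' Hs'). lra. }
        rewrite (transfer delta rB T eta eta0 M v Hh HrB HP He0 Hb s Hs). lra. }
      set (c := exp (lam M eta0 * T)). assert (Hc : 0 < c) by apply exp_pos.
      set (d1 := eta0 / (2 * c)). assert (Hd1 : 0 < d1) by (apply Rdiv_lt_0_compat; lra).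
      assert (Hbeta : P delta rB T eta0 beta).
      { split; auto. intros s Hs. pose proof (H3 (beta - d1) s ltac:(lra) Hs).
        pose proof (flow_lipdep delta rB eta0 M beta (beta - d1) s Hh HrB He0 ltac:(lra)) as L.
        replace (beta - (beta - d1)) with d1 in L by ring. rewrite (Rabs_right d1) in L by lra.
        assert (exp (lam M eta0 * s) <= c).
        { unfold c. apply exp_mono_le. pose proof (lam_pos M eta0 HM0 He0). nra. }
        assert (d1 * exp (lam M eta0 * s) <= eta0 / 2).
        { apply Rle_trans with (d1 * c). apply Rmult_le_compat_l; lra. unfold d1. right; fld. }
        apply Rabs_le_between in L. lra. }
      assert (in_I delta T rB beta) by (apply (I_iff_P delta rB T M); eauto).
      apply HI in H. lra. }
    destruct Hv0 as [v0 [Hv0 HRv0]].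
    exists (mkposreal (beta - v0) ltac:(lra)). intros x Hx Hxb.
    unfold ball in Hx; simpl in Hx; unfold AbsRing_ball, abs, minus, plus, opp in Hx; simpl in Hx.
    apply Rabs_def2 in Hx.
    unfold ball; simpl; unfold AbsRing_ball, abs, minus, plus, opp; simpl.
    pose proof (Hpos x Hxb). pose proof (Hdec v0 x ltac:(lra) Hxb).
    rewrite Ropp_0, Rplus_0_r, Rabs_right by lra. lra.
Qed.
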